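(* Let $(\Omega,P,\pi)$ be a finite irreducible reversible Markov chain (in continuous time) and $\mu$ a probability distribution on $\Omega$. Then for any $0<\epsilon<\delta<1$ and any $0<\beta\le\gamma<1$, $$\mathrm{hit}_{\gamma,\mu}(\delta)\le \mathrm{hit}_{\beta,\mu}(\delta)\le \mathrm{hit}_{\gamma,\mu}(\delta-\epsilon)+\beta^{-1}t_{\mathrm{rel}}\log\Big(\frac{1-\beta}{(1-\gamma)\epsilon}\Big).$$
   Context: Continuous-time chain with heat kernel $H_t(x,y)=\sum_{k\ge0}e^{-t}\frac{t^k}{k!}P^k(x,y)$; reversible means $\pi(x)P(x,y)=\pi(y)P(y,x)$. $\mathrm P_\mu$: law of the chain with $X_0\sim\mu$. $t_{\mathrm{rel}}:=(1-\lambda_2)^{-1}$, $\lambda_2$ the second largest eigenvalue of $P$. $T_B:=\inf\{t\ge0:X_t\in B\}$; $\mathrm{hit}_{\delta,\mu}(q):=\inf\{t\ge0:\max_{B:\pi(B)\ge\delta}\mathrm P_\mu[T_B>t]\le q\}$. *)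

(* Defs.v *)
From Stdlib Require Import Reals Lra List ClassicalEpsilon.
Import ListNotations.
Open Scope R_scope.

(* State space Omega = {0, ..., n-1}; functions on nat are only read there. *)

Definition fsum (n : nat) (f : nat -> R) : R :=
  fold_right Rplus 0 (map f (seq 0 n)).

Definition stochastic (n : nat) (P : nat -> nat -> R) : Prop :=
  (forall x y, (x < n)%nat -> (y < n)%nat -> 0 <= P x y) /\
  (forall x, (x < n)%nat -> fsum n (fun y => P x y) = 1).

Fixpoint matpow (n : nat) (P : nat -> nat -> R) (k : nat) : nat -> nat -> R :=
  match k with
  | O => fun x y => if Nat.eqb x y then 1 else 0
  | S k' => fun x y => fsum n (fun z => matpow n P k' x z * P z y)
  end.

Definition irreducible (n : nat) (P : nat -> nat -> R) : Prop :=
  forall x y, (x < n)%nat -> (y < n)%nat -> exists k, 0 < matpow n P k x y.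

Definition prob_dist (n : nat) (mu : nat -> R) : Prop :=
  (forall x, (x < n)%nat -> 0 <= mu x) /\ fsum n mu = 1.

Definition reversible (n : nat) (P : nat -> nat -> R) (pi : nat -> R) : Prop :=
  forall x y, (x < n)%nat -> (y < n)%nat -> pi x * P x y = pi y * P y x.

Definition eigenvalue (n : nat) (P : nat -> nat -> R) (lam : R) : Prop :=
  exists v : nat -> R, (exists x, (x < n)%nat /\ v x <> 0) /\
    forall x, (x < n)%nat -> fsum n (fun y => P x y * v y) = lam * v x.

(* lambda_2: the second largest eigenvalue of P.  For an irreducible chain the
   eigenvalue 1 is simple (and, P being reversible, all eigenvalues are real),
   so lambda_2 is the largest eigenvalue different from 1. *)
Definition is_lambda2 (n : nat) (P : nat -> nat -> R) (lam2 : R) : Prop :=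
  eigenvalue n P lam2 /\ lam2 <> 1 /\
  forall lam, eigenvalue n P lam -> lam <> 1 -> lam <= lam2.

Definition t_rel (lam2 : R) : R := / (1 - lam2).

Definition measure (n : nat) (pi : nat -> R) (B : nat -> bool) : R :=
  fsum n (fun x => if B x then pi x else 0).

(* Discrete skeleton: s_k(y) = P_mu[Y_0,...,Y_k all outside B, Y_k = y]. *)
Fixpoint surv_vec (n : nat) (P : nat -> nat -> R) (mu : nat -> R)
    (B : nat -> bool) (k : nat) : nat -> R :=
  match k with
  | O => fun y => if B y then 0 else mu y
  | S k' => fun y => if B y then 0
                     else fsum n (fun x => surv_vec n P mu B k' x * P x y)
  end.

(* Continuous-time chain (rate-1 Poisson clock, heat kernel
   H_t = sum_k e^{-t} t^k/k! P^k):
   P_mu[T_B > t] = sum_k e^{-t} t^k / k! * P_mu[Y_0..Y_k outside B]. *)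
Definition surv_term (n : nat) (P : nat -> nat -> R) (mu : nat -> R)
    (B : nat -> bool) (t : R) (k : nat) : R :=
  exp (- t) * t ^ k / INR (Factorial.fact k) * fsum n (surv_vec n P mu B k).

Definition tail_prob (n : nat) (P : nat -> nat -> R) (mu : nat -> R)
    (B : nat -> bool) (t : R) : R :=
  epsilon (inhabits 0) (fun l => infinite_sum (surv_term n P mu B t) l).

Definition is_glb (E : R -> Prop) (m : R) : Prop :=
  (forall x, E x -> m <= x) /\ (forall b, (forall x, E x -> b <= x) -> b <= m).

Definition hit_set (n : nat) (P : nat -> nat -> R) (pi mu : nat -> R)
    (delta q : R) (t : R) : Prop :=
  0 <= t /\
  forall B : nat -> bool, delta <= measure n pi B -> tail_prob n P mu B t <= q.

Definition hit (n : nat) (P : nat -> nat -> R) (pi mu : nat -> R)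
    (delta q : R) : R :=
  epsilon (inhabits 0) (fun m => is_glb (hit_set n P pi mu delta q) m).

(* Submission.v *)
Require Import Defs.
From Stdlib Require Import Reals Lra Lia List Factorial Bool Classical ClassicalEpsilon.
Open Scope R_scope.

Lemma fsum_0 f : fsum 0 f = 0.
Proof. reflexivity. Qed.

Lemma fold_app (l1 l2 : list R) :
  fold_right Rplus 0 (l1 ++ l2) = fold_right Rplus 0 l1 + fold_right Rplus 0 l2.
Proof. induction l1; simpl; [ring | rewrite IHl1; ring]. Qed.

Lemma fsum_S n f : fsum (S n) f = fsum n f + f n.
Proof.
  unfold fsum. rewrite seq_S, map_app, fold_app. simpl. ring.
Qed.

Lemma fsum_ext n f g : (forall x, (x < n)%nat -> f x = g x) -> fsum n f = fsum n g.
Proof.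
  induction n; intros H; [reflexivity|].
  rewrite !fsum_S, IHn by (intros; apply H; lia). rewrite H by lia. reflexivity.
Qed.

Lemma fsum_plus n f g : fsum n (fun x => f x + g x) = fsum n f + fsum n g.
Proof. induction n; [simpl; unfold fsum; simpl; ring|]. rewrite !fsum_S, IHn. ring. Qed.

Lemma fsum_scal n c f : fsum n (fun x => c * f x) = c * fsum n f.
Proof. induction n; [unfold fsum; simpl; ring|]. rewrite !fsum_S, IHn. ring. Qed.

Lemma fsum_scal_r n c f : fsum n (fun x => f x * c) = fsum n f * c.
Proof. induction n; [unfold fsum; simpl; ring|]. rewrite !fsum_S, IHn. ring. Qed.

Lemma fsum_minus n f g : fsum n (fun x => f x - g x) = fsum n f - fsum n g.
Proof. induction n; [unfold fsum; simpl; ring|]. rewrite !fsum_S, IHn. ring. Qed.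

Lemma fsum_const0 n : fsum n (fun _ => 0) = 0.
Proof. induction n; [reflexivity|]. rewrite fsum_S, IHn. ring. Qed.

Lemma fsum_le n f g : (forall x, (x < n)%nat -> f x <= g x) -> fsum n f <= fsum n g.
Proof.
  induction n; intros H; [unfold fsum; simpl; lra|].
  rewrite !fsum_S. assert (fsum n f <= fsum n g) by (apply IHn; intros; apply H; lia).
  assert (f n <= g n) by (apply H; lia). lra.
Qed.

Lemma fsum_nonneg n f : (forall x, (x < n)%nat -> 0 <= f x) -> 0 <= fsum n f.
Proof. intros H. rewrite <- (fsum_const0 n). apply fsum_le. exact H. Qed.

Lemma fsum_swap n m (F : nat -> nat -> R) :
  fsum n (fun x => fsum m (fun y => F x y)) = fsum m (fun y => fsum n (fun x => F x y)).
Proof.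
  induction n.
  - rewrite fsum_0. symmetry. rewrite (fsum_ext m _ (fun _ => 0)). apply fsum_const0.
    intros; reflexivity.
  - rewrite fsum_S, IHn, <- fsum_plus. apply fsum_ext. intros. rewrite fsum_S. reflexivity.
Qed.

Lemma fsum_single_le n f x : (forall y, (y < n)%nat -> 0 <= f y) -> (x < n)%nat -> f x <= fsum n f.
Proof.
  induction n; intros H Hx; [lia|].
  rewrite fsum_S. assert (0 <= fsum n f) by (apply fsum_nonneg; intros; apply H; lia).
  destruct (Nat.eq_dec x n) as [->|Hne].
  - lra.
  - assert (f x <= fsum n f) by (apply IHn; [intros; apply H; lia | lia]).
    assert (0 <= f n) by (apply H; lia). lra.
Qed.

Lemma fsum_eq0 n f : (forall y, (y < n)%nat -> 0 <= f y) -> fsum n f = 0 ->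
  forall x, (x < n)%nat -> f x = 0.
Proof.
  intros H H0 x Hx. assert (f x <= fsum n f) by (apply fsum_single_le; auto).
  assert (0 <= f x) by auto. lra.
Qed.

Lemma fsum_delta n g x : (x < n)%nat ->
  fsum n (fun y => (if Nat.eqb x y then 1 else 0) * g y) = g x.
Proof.
  induction n; intros Hx; [lia|].
  rewrite fsum_S. destruct (Nat.eq_dec x n) as [->|Hne].
  - rewrite Nat.eqb_refl. rewrite (fsum_ext n _ (fun _ => 0)). rewrite fsum_const0. ring.
    intros y Hy. destruct (Nat.eqb_spec n y); [lia|ring].
  - rewrite IHn by lia. destruct (Nat.eqb_spec x n); [lia|ring].
Qed.

Lemma fsum_delta_r n g x : (x < n)%nat ->
  fsum n (fun y => g y * (if Nat.eqb y x then 1 else 0)) = g x.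
Proof.
  intros Hx. rewrite <- (fsum_delta n g x Hx). apply fsum_ext. intros y Hy.
  rewrite Nat.eqb_sym. ring.
Qed.

Lemma argmax n (f : nat -> R) : (0 < n)%nat ->
  exists x, (x < n)%nat /\ forall y, (y < n)%nat -> f y <= f x.
Proof.
  induction n; intros Hn; [lia|].
  destruct n.
  - exists 0%nat. split; [lia|]. intros y Hy. assert (y = 0%nat) by lia. subst. lra.
  - destruct IHn as [x [Hx H]]; [lia|].
    destruct (Rle_dec (f (S n)) (f x)).
    + exists x. split; [lia|]. intros y Hy. destruct (Nat.eq_dec y (S n)); [subst; auto|].
      apply H; lia.
    + exists (S n). split; [lia|]. intros y Hy. destruct (Nat.eq_dec y (S n)); [subst; lra|].
      assert (f y <= f x) by (apply H; lia). lra.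
Qed.

From mathcomp Require all_boot all_algebra Rstruct.
Module LA.
Import all_boot all_algebra Rstruct.
Import GRing.Theory.
Local Open Scope ring_scope.
Lemma seq_iota s n : List.seq s n = iota s n.
Proof. by elim: n s => //= n IH s; rewrite IH. Qed.
Lemma fsum_big n (g : nat -> R) : fsum n g = \sum_(i < n) g i.
Proof.
rewrite /fsum seq_iota -(big_mkord xpredT) /index_iota subn0.
elim: (iota 0 n) => [|a l IH]; first by rewrite big_nil.
by rewrite big_cons /= IH.
Qed.

Definition ext (n : nat) (v : 'I_n -> R) (k : nat) : R :=
  match insub k with Some i => v i | None => 0 end.
Arguments ext {n}.
Lemma extE n v (i : 'I_n) : ext v i = v i.
Proof. by rewrite /ext valK. Qed.

Lemma kernel_or_inverse (n:nat) (M : nat -> nat -> R) :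
  (exists v : nat -> R, (exists x, lt x n /\ v x <> 0) /\
      forall x, lt x n -> fsum n (fun y => M x y * v y) = 0)
  \/ (exists N : nat -> nat -> R, forall f x, lt x n ->
        fsum n (fun y => M x y * fsum n (fun z => N y z * f z)) = f x).
Proof.
pose A : 'M[R]_n := \matrix_(i, j) M j i.
have [/det0P [v nz vA] | uA] := boolP (\det A == 0).
  left; exists (ext (fun i => v 0 i)); split.
    have [i vi] : exists i, v 0 i != 0.
      apply/existsP; apply: contraR nz; rewrite negb_exists => /forallP H.
      by apply/eqP/rowP => i; rewrite mxE; apply/eqP; have := H i; rewrite negbK.
    by exists i; split; [apply/ltP; exact: ltn_ord | rewrite extE; apply/eqP].
  move=> x /ltP xn; have := congr1 (fun w : 'rV[R]_n => w 0 (Ordinal xn)) vA.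
  rewrite !mxE fsum_big => H; rewrite -[X in _ = X]H; apply: eq_bigr => i _.
  by rewrite extE mulrC /A mxE.
right; have Au : A \in unitmx by rewrite unitmxE unitfE.
pose B := invmx A.
exists (fun y z => ext (fun j : 'I_n => ext (fun i : 'I_n => B j i) y) z).
move=> f x /ltP xn.
pose fr : 'rV[R]_n := \row_i f i.
have := congr1 (fun w : 'rV[R]_n => w 0 (Ordinal xn)) (esym (mulmxKV Au fr)).
rewrite !mxE => ->; rewrite fsum_big; apply: eq_bigr => j _.
rewrite [A _ _]mxE mulrC; congr (_ * _); rewrite fsum_big !mxE.
by apply: eq_bigr => k _; rewrite !mxE !extE mulrC.
Qed.
End LA.


Section Generic.
Variable n : nat.
Variable w : nat -> R.
Hypothesis Hw : forall x, (x < n)%nat -> 0 < w x.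

Definition ip (g h : nat -> R) := fsum n (fun x => w x * g x * h x).
Definition mv (Z : nat -> nat -> R) (h : nat -> R) := fun x => fsum n (fun y => Z x y * h y).
Definition selfadj (Z : nat -> nat -> R) := forall x y, (x < n)%nat -> (y < n)%nat ->
  w x * Z x y = w y * Z y x.

Lemma ip_ext g1 g2 h1 h2 : (forall x, (x < n)%nat -> g1 x = g2 x) ->
  (forall x, (x < n)%nat -> h1 x = h2 x) -> ip g1 h1 = ip g2 h2.
Proof. intros. unfold ip. apply fsum_ext. intros. rewrite H, H0 by auto. ring. Qed.

Lemma ip_comm g h : ip g h = ip h g.
Proof. unfold ip. apply fsum_ext. intros. ring. Qed.

Lemma ip_lin_r g a h1 b h2 : ip g (fun x => a * h1 x + b * h2 x) = a * ip g h1 + b * ip g h2.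
Proof.
  unfold ip. rewrite <- !fsum_scal, <- fsum_plus. apply fsum_ext. intros. ring.
Qed.

Lemma ip_lin_l g a h1 b h2 : ip (fun x => a * h1 x + b * h2 x) g = a * ip h1 g + b * ip h2 g.
Proof. rewrite ip_comm, ip_lin_r, (ip_comm g h1), (ip_comm g h2). ring. Qed.

Lemma ip_nonneg g : 0 <= ip g g.
Proof. apply fsum_nonneg. intros. specialize (Hw x H). nra. Qed.

Lemma ip_zero g : ip g g = 0 -> forall x, (x < n)%nat -> g x = 0.
Proof.
  intros H x Hx. assert (w x * g x * g x = 0).
  { apply (fsum_eq0 n (fun x => w x * g x * g x)); auto. intros. specialize (Hw y H0). nra. }
  specialize (Hw x Hx). assert (g x * g x = 0).
  { apply (Rmult_eq_reg_l (w x)); [|lra]. rewrite <- Rmult_assoc. lra. }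
  nra.
Qed.

Lemma ip_zero_l g h : (forall x, (x < n)%nat -> g x = 0) -> ip g h = 0.
Proof.
  intros H. unfold ip. rewrite (fsum_ext n _ (fun _ => 0)). apply fsum_const0.
  intros. rewrite H by auto. ring.
Qed.

Lemma mv_lin Z a h1 b h2 x :
  mv Z (fun y => a * h1 y + b * h2 y) x = a * mv Z h1 x + b * mv Z h2 x.
Proof. unfold mv. rewrite <- !fsum_scal, <- fsum_plus. apply fsum_ext. intros. ring. Qed.

Lemma mv_ext Z h1 h2 x : (forall y, (y < n)%nat -> h1 y = h2 y) -> mv Z h1 x = mv Z h2 x.
Proof. intros. unfold mv. apply fsum_ext. intros. rewrite H by auto. reflexivity. Qed.

Lemma selfadj_ip Z g h : selfadj Z -> ip (mv Z g) h = ip g (mv Z h).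
Proof.
  intros HZ. unfold ip, mv.
  transitivity (fsum n (fun x => fsum n (fun y => w x * Z x y * g y * h x))).
  - apply fsum_ext. intros x Hx. rewrite <- fsum_scal, <- fsum_scal_r. apply fsum_ext.
    intros. ring.
  - rewrite fsum_swap. apply fsum_ext. intros y Hy. rewrite <- fsum_scal.
    apply fsum_ext. intros x Hx. rewrite (HZ x y Hx Hy). ring.
Qed.

Lemma quad_disc a b c : (forall x, 0 <= a + 2 * b * x + c * x * x) -> b * b <= a * c.
Proof.
  intros H.
  assert (Ha : 0 <= a) by (specialize (H 0); lra).
  destruct (Rle_lt_dec c 0) as [Hc|Hc].
  - destruct (Req_dec c 0) as [Hc0|Hc0].
    + subst c. destruct (Req_dec b 0) as [->|Hb]; [lra|].
      specialize (H (- (a + 1) / (2 * b))).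
      assert (2 * b * (- (a + 1) / (2 * b)) = - (a+1)) by (field; auto). nra.
    + specialize (H (1 + (2 * Rabs b + a) / (- c))). exfalso.
      set (x := 1 + (2 * Rabs b + a) / (- c)) in *.
      assert (Hx : 1 <= x). { unfold x. assert (0 <= (2 * Rabs b + a)/(-c)).
        { unfold Rdiv; apply Rmult_le_pos; [pose proof (Rabs_pos b); lra| left; apply Rinv_0_lt_compat; lra]. } lra. }
      assert (- c * x >= 2 * Rabs b + a + (-c)).
      { unfold x. replace (- c * (1 + (2 * Rabs b + a) / - c)) with (-c + (2 * Rabs b + a)) by (field; lra). lra. }
      assert (2*b*x <= 2 * Rabs b * x). { pose proof (Rle_abs b). nra. }
      nra.
  - specialize (H (- b / c)).
    replace (a + 2 * b * (- b / c) + c * (- b / c) * (- b / c)) with (a - b * b / c) in H by (field; lra).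
    assert (b * b / c <= a) by lra.
    apply Rmult_le_compat_r with (r := c) in H0; [|lra].
    replace (b * b / c * c) with (b*b) in H0 by (field; lra). lra.
Qed.

Lemma psd_CS Z u v : selfadj Z -> (forall g, 0 <= ip g (mv Z g)) ->
  ip u (mv Z v) * ip u (mv Z v) <= ip u (mv Z u) * ip v (mv Z v).
Proof.
  intros HZ Hpsd. apply quad_disc. intros x.
  specialize (Hpsd (fun y => 1 * u y + x * v y)).
  rewrite (ip_ext _ _ (mv Z (fun y => 1 * u y + x * v y)) (fun y => 1 * mv Z u y + x * mv Z v y))
    in Hpsd by (intros; apply mv_lin || reflexivity).
  rewrite ip_lin_l, !ip_lin_r in Hpsd.
  assert (ip v (mv Z u) = ip u (mv Z v)) by (rewrite <- selfadj_ip by auto; apply ip_comm).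
  rewrite H in Hpsd. nra.
Qed.

Lemma form_bound Z : exists C, 0 < C /\ forall g, ip g (mv Z g) <= C * ip g g.
Proof.
  exists (1 + fsum n (fun x => fsum n (fun y => Rabs (w x * Z x y) * (/ w x + / w y)))).
  split.
  - assert (0 <= fsum n (fun x => fsum n (fun y => Rabs (w x * Z x y) * (/ w x + / w y)))).
    { apply fsum_nonneg. intros. apply fsum_nonneg. intros.
      apply Rmult_le_pos; [apply Rabs_pos|].
      pose proof (Hw x H); pose proof (Hw x0 H0).
      assert (0 < / w x) by (apply Rinv_0_lt_compat; auto).
      assert (0 < / w x0) by (apply Rinv_0_lt_compat; auto). lra. }
    lra.
  - intros g. set (N := ip g g).
    assert (HN : 0 <= N) by apply ip_nonneg.
    assert (Hpt : forall x, (x < n)%nat -> g x * g x <= N * / w x).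
    { intros x Hx. pose proof (Hw x Hx).
      assert (w x * g x * g x <= N).
      { unfold N, ip. apply (fsum_single_le n (fun x => w x * g x * g x)); auto.
        intros. specialize (Hw y H0). nra. }
      apply (Rmult_le_reg_l (w x)); auto. replace (w x * (N * / w x)) with N by (field; lra). lra. }
    unfold ip at 1, mv.
    transitivity (fsum n (fun x => fsum n (fun y => Rabs (w x * Z x y) * (/ w x + / w y)) * N)).
    + apply fsum_le. intros x Hx. rewrite <- fsum_scal, <- fsum_scal_r. apply fsum_le.
      intros y Hy.
      assert (w x * g x * (Z x y * g y) = (w x * Z x y) * (g x * g y)) by ring. rewrite H.
      assert (Habs : (w x * Z x y) * (g x * g y) <= Rabs (w x * Z x y) * Rabs (g x * g y)).
      { rewrite <- Rabs_mult. apply Rle_abs. }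
      assert (Rabs (g x * g y) <= (g x * g x + g y * g y) / 2).
      { apply Rabs_le. split; [pose proof (Rle_0_sqr (g x + g y)); unfold Rsqr in *; nra | pose proof (Rle_0_sqr (g x - g y)); unfold Rsqr in *; nra]. }
      pose proof (Hpt x Hx). pose proof (Hpt y Hy).
      pose proof (Rabs_pos (w x * Z x y)).
      assert (Rabs (g x * g y) <= N * (/ w x + / w y)) by nra.
      apply Rle_trans with (1 := Habs). rewrite Rmult_assoc.
      apply Rmult_le_compat_l; auto. lra.
    + rewrite fsum_scal_r. fold N.
      assert (0 <= fsum n (fun x => fsum n (fun y => Rabs (w x * Z x y) * (/ w x + / w y)))).
      { apply fsum_nonneg. intros. apply fsum_nonneg. intros.
        apply Rmult_le_pos; [apply Rabs_pos|].
        pose proof (Hw x H); pose proof (Hw x0 H0).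
        assert (0 < / w x) by (apply Rinv_0_lt_compat; auto).
        assert (0 < / w x0) by (apply Rinv_0_lt_compat; auto). lra. }
      nra.
Qed.

End Generic.


Section Eigen.
Variable n : nat.
Variable w : nat -> R.
Hypothesis Hw : forall x, (x < n)%nat -> 0 < w x.

Notation ip := (ip n w).
Notation mv := (mv n).
Notation selfadj := (selfadj n w).

Definition Idm (x y : nat) : R := if Nat.eqb x y then 1 else 0.

Lemma mv_Id h x : (x < n)%nat -> mv Idm h x = h x.
Proof. intros. unfold mv, Idm. apply fsum_delta. auto. Qed.

Lemma eigen_exists S c h0 : selfadj S -> ip h0 (mv S h0) > c * ip h0 h0 ->
  exists v th, (exists x, (x<n)%nat /\ v x <> 0) /\ c < th /\
    forall x, (x<n)%nat -> mv S v x = th * v x.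
Proof.
  intros HS Hh0.
  set (q := fun g => ip g (mv S g)).
  set (T := fun t => forall g, q g <= t * ip g g).
  assert (Hq0 : forall g, ip g g = 0 -> q g = 0).
  { intros g Hg. unfold q. apply ip_zero_l. apply (ip_zero n w Hw); auto. }
  assert (Hn0 : 0 < ip h0 h0).
  { destruct (ip_nonneg n w Hw h0) as [H|H]; auto. symmetry in H.
    specialize (Hq0 h0 H). fold (q h0) in Hh0. rewrite H in Hh0. lra. }
  set (r0 := q h0 / ip h0 h0).
  assert (Hr0 : c < r0).
  { unfold r0. apply (Rmult_lt_reg_r (ip h0 h0)); auto. unfold Rdiv.
    rewrite Rmult_assoc, Rinv_l by lra. fold (q h0) in Hh0. lra. }
  assert (HTlow : forall t, T t -> r0 <= t).
  { intros t Ht. unfold r0. specialize (Ht h0).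
    apply (Rmult_le_reg_r (ip h0 h0)); auto. unfold Rdiv.
    rewrite Rmult_assoc, Rinv_l by lra. lra. }
  destruct (form_bound n w Hw S) as [C [HC HCb]].
  set (E := fun x => T (- x)).
  assert (HEb : bound E).
  { exists (- r0). intros x Hx. unfold E in Hx. apply HTlow in Hx. lra. }
  assert (HEne : exists x, E x).
  { exists (- C). unfold E. rewrite Ropp_involutive. intros g. apply HCb. }
  destruct (completeness E HEb HEne) as [m [Hub Hlub]].
  set (ts := - m).
  assert (Hlow : forall t, T t -> ts <= t).
  { intros t Ht. assert (E (- t)) by (unfold E; rewrite Ropp_involutive; auto).
    apply Hub in H. unfold ts. lra. }
  assert (Hgreat : forall b, (forall t, T t -> b <= t) -> b <= ts).
  { intros b Hb. assert (m <= - b).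
    { apply Hlub. intros x Hx. unfold E in Hx. apply Hb in Hx. lra. }
    unfold ts. lra. }
  assert (Hts_r0 : r0 <= ts) by (apply Hgreat; auto).
  assert (HTts : T ts).
  { intros g. destruct (Rle_dec (q g) (ts * ip g g)) as [H|H]; auto. exfalso.
    assert (Hng : 0 < ip g g).
    { destruct (ip_nonneg n w Hw g) as [H1|H1]; auto. symmetry in H1.
      rewrite (Hq0 g H1), H1 in H. lra. }
    set (t1 := q g / ip g g).
    assert (Ht1 : ts < t1).
    { unfold t1. apply (Rmult_lt_reg_r (ip g g)); auto. unfold Rdiv.
      rewrite Rmult_assoc, Rinv_l by lra. lra. }
    assert (~ (forall t, T t -> t1 <= t)).
    { intros Hb. apply Hgreat in Hb. lra. }
    apply H0. intros t Ht. destruct (Rle_dec t1 t) as [|Hlt]; auto. exfalso.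
    specialize (Ht g). assert (t * ip g g < t1 * ip g g) by (apply Rmult_lt_compat_r; lra).
    unfold t1 in H1. unfold Rdiv in H1. rewrite Rmult_assoc, Rinv_l in H1 by lra. lra. }
  set (M := fun x y => ts * Idm x y - S x y).
  assert (HmvM : forall h x, (x < n)%nat -> mv M h x = ts * h x - mv S h x).
  { intros h x Hx. unfold mv, M. rewrite fsum_ext with (g := fun y => ts * (Idm x y * h y) - S x y * h y)
      by (intros; ring).
    rewrite fsum_minus, fsum_scal. fold (mv Idm h x). rewrite mv_Id; auto. }
  assert (HipM : forall g h, ip g (mv M h) = ts * ip g h - ip g (mv S h)).
  { intros g h. rewrite (ip_ext n w g g (mv M h) (fun x => ts * h x + (-1) * mv S h x)).
    rewrite ip_lin_r. ring. auto. intros. rewrite HmvM; auto. ring. }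
  assert (HMsa : selfadj M).
  { intros x y Hx Hy. unfold M, Idm. rewrite Nat.eqb_sym.
    assert (w x * S x y = w y * S y x) by auto.
    destruct (Nat.eqb_spec y x); [subst; ring|]. nra. }
  assert (HMpsd : forall g, 0 <= ip g (mv M g)).
  { intros g. rewrite HipM. specialize (HTts g). unfold q in HTts. lra. }
  destruct (LA.kernel_or_inverse n M) as [[v [Hv Hker]] | [N HN]].
  - exists v, ts. split; [exact Hv|]. split; [lra|]. intros x Hx.
    specialize (Hker x Hx). change (mv M v x = 0) in Hker. rewrite HmvM in Hker; auto. lra.
  - exfalso.
    destruct (form_bound n w Hw N) as [C2 [HC2 HC2b]].
    assert (HT2 : T (ts - / C2)).
    { intros g. destruct (ip_nonneg n w Hw g) as [Hng|Hng]; cycle 1.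
      { symmetry in Hng. rewrite (Hq0 g Hng), Hng. lra. }
      set (u := mv N g).
      assert (Hu : forall x, (x < n)%nat -> mv M u x = g x) by (intros; apply HN; auto).
      pose proof (psd_CS n w M u g HMsa HMpsd) as Hcs.
      assert (E1 : ip u (mv M g) = ip g g).
      { rewrite <- selfadj_ip by auto. apply ip_ext; auto. }
      assert (E2 : ip u (mv M u) = ip g (mv N g)).
      { rewrite (ip_ext n w u u (mv M u) g); auto. apply ip_comm. }
      rewrite E1, E2 in Hcs. specialize (HC2b g).
      set (pM := ip g (mv M g)) in *.
      assert (0 <= pM) by apply HMpsd.
      assert (ip g g * ip g g <= C2 * ip g g * pM) by nra.
      assert (ip g g <= C2 * pM).
      { apply (Rmult_le_reg_l (ip g g)); auto. nra. }
      assert (/ C2 * ip g g <= pM).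
      { apply (Rmult_le_reg_l C2); auto. rewrite <- Rmult_assoc, Rinv_r by lra. lra. }
      unfold pM in *. rewrite HipM in *. unfold q. lra. }
    apply Hlow in HT2. assert (0 < / C2) by (apply Rinv_0_lt_compat; auto). lra.
Qed.
End Eigen.


Section Chain.
Variable n : nat.
Variable P : nat -> nat -> R.
Variable pi : nat -> R.
Hypothesis Hst : stochastic n P.
Hypothesis Hpi : forall x, (x < n)%nat -> 0 < pi x.
Hypothesis Hpid : prob_dist n pi.
Hypothesis Hrev : reversible n P pi.

Notation ip := (ip n pi).
Notation mv := (mv n).

Lemma P_nonneg x y : (x < n)%nat -> (y < n)%nat -> 0 <= P x y.
Proof. destruct Hst. auto. Qed.
Lemma P_row x : (x < n)%nat -> fsum n (fun y => P x y) = 1.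
Proof. destruct Hst. auto. Qed.

Lemma stationary y : (y < n)%nat -> fsum n (fun x => pi x * P x y) = pi y.
Proof.
  intros Hy. rewrite (fsum_ext n _ (fun x => pi y * P y x)).
  rewrite fsum_scal, P_row by auto. ring. intros. symmetry. apply Hrev; auto.
Qed.

Lemma P_selfadj : selfadj n pi P.
Proof. intros x y Hx Hy. apply Hrev; auto. Qed.

Lemma contraction Z h : selfadj n pi Z ->
  (forall x y, (x < n)%nat -> (y < n)%nat -> 0 <= Z x y) ->
  (forall x, (x < n)%nat -> fsum n (fun y => Z x y) <= 1) ->
  - ip h h <= ip h (mv Z h) /\ ip h (mv Z h) <= ip h h.
Proof.
  intros HZ Hnn Hrow.
  set (D1 := fsum n (fun x => fsum n (fun y => pi x * Z x y * (h x * h x)))).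
  set (D2 := fsum n (fun x => fsum n (fun y => pi x * Z x y * (h y * h y)))).
  assert (HD : D2 = D1).
  { unfold D1, D2. rewrite fsum_swap. apply fsum_ext. intros y Hy. apply fsum_ext.
    intros x Hx. rewrite (HZ x y Hx Hy). ring. }
  assert (HD1 : D1 <= ip h h).
  { unfold D1, ip. apply fsum_le. intros x Hx.
    rewrite (fsum_ext n _ (fun y => pi x * (h x * h x) * Z x y)) by (intros; ring).
    rewrite fsum_scal. pose proof (Hrow x Hx). pose proof (Hpi x Hx).
    assert (0 <= pi x * (h x * h x)) by (apply Rmult_le_pos; [lra| nra]).
    replace (pi x * h x * h x) with (pi x * (h x * h x) * 1) by ring.
    apply Rmult_le_compat_l; auto. }
  assert (Hexp : ip h (mv Z h) = fsum n (fun x => fsum n (fun y => pi x * Z x y * (h x * h y)))).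
  { unfold ip, mv. apply fsum_ext. intros x Hx. rewrite <- fsum_scal. apply fsum_ext.
    intros. ring. }
  assert (Hsq : forall s, fsum n (fun x => fsum n (fun y => pi x * Z x y * ((h x + s * h y) * (h x + s * h y))))
     = D1 + (s * s) * D2 + (2 * s) * ip h (mv Z h)).
  { intros s. rewrite Hexp. unfold D1, D2. rewrite <- !fsum_scal, <- !fsum_plus. apply fsum_ext.
    intros x Hx. rewrite <- !fsum_scal, <- !fsum_plus. apply fsum_ext. intros. ring. }
  assert (Hnn2 : forall s, 0 <= fsum n (fun x => fsum n (fun y => pi x * Z x y * ((h x + s * h y) * (h x + s * h y))))).
  { intros s. apply fsum_nonneg. intros x Hx. apply fsum_nonneg. intros y Hy.
    pose proof (Hpi x Hx). pose proof (Hnn x y Hx Hy).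
    apply Rmult_le_pos; [apply Rmult_le_pos; lra|]. pose proof (Rle_0_sqr (h x + s * h y)). unfold Rsqr in *. lra. }
  pose proof (Hsq 1) as E1. pose proof (Hsq (-1)) as E2. pose proof (Hnn2 1). pose proof (Hnn2 (-1)).
  rewrite HD in *. split; lra.
Qed.

Lemma ip_pos v : (exists x, (x < n)%nat /\ v x <> 0) -> 0 < ip v v.
Proof.
  intros [x [Hx Hv]]. destruct (ip_nonneg n pi Hpi v) as [H|H]; auto.
  exfalso. apply Hv. apply (ip_zero n pi Hpi); auto.
Qed.

Lemma P_contraction h : - ip h h <= ip h (mv P h) /\ ip h (mv P h) <= ip h h.
Proof.
  apply contraction. apply P_selfadj. apply P_nonneg. intros. rewrite P_row; auto. lra.
Qed.

Lemma eigen_le1 lam : eigenvalue n P lam -> lam <= 1.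
Proof.
  intros [v [Hnz Hev]].
  assert (ip v (mv P v) = lam * ip v v).
  { unfold Submission.ip. rewrite <- fsum_scal. apply fsum_ext. intros x Hx.
    unfold mv. rewrite Hev by auto. ring. }
  pose proof (ip_pos v Hnz). destruct (P_contraction v). nra.
Qed.

Lemma matpow_nonneg k x y : (x < n)%nat -> (y < n)%nat -> 0 <= matpow n P k x y.
Proof.
  revert y. induction k; intros y Hx Hy; simpl.
  - destruct (Nat.eqb x y); lra.
  - apply fsum_nonneg. intros. apply Rmult_le_pos; auto. apply P_nonneg; auto.
Qed.

Lemma matpow_harm k v x : (forall z, (z < n)%nat -> mv P v z = v z) -> (x < n)%nat ->
  fsum n (fun y => matpow n P k x y * v y) = v x.
Proof.
  intros Hh Hx. induction k; simpl.
  - apply fsum_delta; auto.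
  - rewrite <- IHk.
    transitivity (fsum n (fun y => fsum n (fun z => matpow n P k x z * P z y * v y))).
    + apply fsum_ext. intros. rewrite <- fsum_scal_r. reflexivity.
    + rewrite fsum_swap. apply fsum_ext. intros z Hz. rewrite <- (Hh z Hz). unfold mv.
      rewrite <- fsum_scal. apply fsum_ext. intros. ring.
Qed.

Lemma harmonic v : irreducible n P -> (forall z, (z < n)%nat -> mv P v z = v z) ->
  fsum n (fun x => pi x * v x) = 0 -> forall x, (x < n)%nat -> v x = 0.
Proof.
  intros Hirr Hh H0.
  assert (Hn : (0 < n)%nat).
  { destruct n; [|lia]. destruct Hpid as [_ Hs]. unfold fsum in Hs. simpl in Hs. lra. }
  destruct (argmax n v Hn) as [x0 [Hx0 Hmax]].
  assert (Hc : forall y, (y < n)%nat -> v y = v x0).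
  { intros y Hy. destruct (Hirr x0 y Hx0 Hy) as [k Hk].
    assert (Hrow : fsum n (fun z => matpow n P k x0 z * 1) = 1).
    { apply (matpow_harm k (fun _ => 1)); auto. intros. unfold mv.
      rewrite fsum_scal_r, P_row; auto. ring. }
    pose proof (matpow_harm k v x0 Hh Hx0) as Hv.
    assert (fsum n (fun z => matpow n P k x0 z * (v x0 - v z)) = 0).
    { rewrite (fsum_ext n _ (fun z => v x0 * (matpow n P k x0 z * 1) - matpow n P k x0 z * v z))
        by (intros; ring).
      rewrite fsum_minus, fsum_scal, Hrow, Hv. ring. }
    assert (Hz : matpow n P k x0 y * (v x0 - v y) = 0).
    { apply (fsum_eq0 n (fun z => matpow n P k x0 z * (v x0 - v z))); auto.
      intros z Hz'. apply Rmult_le_pos. apply matpow_nonneg; auto. pose proof (Hmax z Hz'). lra. } assert (v x0 - v y = 0) by (apply (Rmult_eq_reg_l (matpow n P k x0 y)); lra).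
    lra. }
  assert (fsum n (fun x => pi x * v x) = v x0).
  { rewrite (fsum_ext n _ (fun x => v x0 * pi x)). rewrite fsum_scal. destruct Hpid as [_ ->]. ring.
    intros. rewrite Hc; auto. ring. }
  intros x Hx. rewrite Hc; auto. lra.
Qed.

Variable lam2 : R.
Hypothesis Hirr : irreducible n P.
Hypothesis Hl2 : is_lambda2 n P lam2.

Lemma lam2_lt1 : lam2 < 1.
Proof.
  destruct Hl2 as [He [Hne _]]. pose proof (eigen_le1 lam2 He). lra.
Qed.

Definition pmean (h : nat -> R) := fsum n (fun x => pi x * h x).

Lemma poincare h : ip h (mv P h) <= lam2 * ip h h + (1 - lam2) * (pmean h * pmean h).
Proof.
  set (k := 1 - lam2).
  set (S := fun x y => P x y - k * pi y).
  assert (HmvS : forall g x, (x < n)%nat -> mv S g x = mv P g x - k * pmean g).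
  { intros g x Hx. unfold mv, S, pmean.
    rewrite (fsum_ext n _ (fun y => P x y * g y - k * (pi y * g y))) by (intros; ring).
    rewrite fsum_minus, fsum_scal. reflexivity. }
  assert (HipS : forall g, ip g (mv S g) = ip g (mv P g) - k * (pmean g * pmean g)).
  { intros g. rewrite (ip_ext n pi g g (mv S g) (fun x => 1 * mv P g x + (- k * pmean g) * 1))
      by (auto || (intros; rewrite HmvS; auto; ring)).
    rewrite ip_lin_r. unfold ip at 2, pmean. rewrite <- fsum_scal.
    rewrite (fsum_ext n _ (fun x => (- k * fsum n (fun x0 => pi x0 * g x0)) * (pi x * g x))) by (intros; ring). rewrite fsum_scal.
    ring. }
  destruct (Rle_dec (ip h (mv S h)) (lam2 * ip h h)) as [Hle|Hgt].
  - rewrite HipS in Hle. fold k. lra.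
  - exfalso. apply Rnot_le_lt in Hgt.
    assert (HSsa : selfadj n pi S).
    { intros x y Hx Hy. unfold S. pose proof (Hrev x y Hx Hy). nra. }
    destruct (eigen_exists n pi Hpi S lam2 h HSsa Hgt) as [v [th [Hnz [Hth Hev]]]].
    assert (Hm : pmean v = 0).
    { assert (Hsum : fsum n (fun x => pi x * mv S v x) = th * pmean v).
      { unfold pmean. rewrite <- fsum_scal. apply fsum_ext. intros. rewrite Hev; auto. ring. }
      assert (fsum n (fun x => pi x * mv S v x) = (1 - k) * pmean v).
      { unfold mv, S, pmean.
        transitivity (fsum n (fun x => fsum n (fun y => pi x * P x y * v y - k * pi x * (pi y * v y)))).
        - apply fsum_ext. intros. rewrite <- fsum_scal. apply fsum_ext. intros. ring.
        - rewrite fsum_swap.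
          rewrite (fsum_ext n _ (fun y => v y * fsum n (fun x => pi x * P x y) - (k * pi y * v y) * fsum n (fun x => pi x))).
          + destruct Hpid as [_ Hs]. change (fsum n (fun x => pi x)) with (fsum n pi). rewrite Hs. rewrite <- fsum_scal. apply fsum_ext.
            intros. rewrite stationary; auto. ring.
          + intros y Hy. rewrite <- fsum_scal, <- (fsum_scal n (k * pi y * v y)), <- fsum_minus. apply fsum_ext. intros. ring. }
      unfold k in H. assert ((th - lam2) * pmean v = 0) by lra.
      apply Rmult_integral in H0. destruct H0; lra. }
    assert (HPv : forall x, (x < n)%nat -> mv P v x = th * v x).
    { intros x Hx. rewrite <- Hev, HmvS, Hm by auto. ring. }
    destruct Hl2 as [_ [_ Hmaxl]].
    destruct (Req_dec th 1) as [H1|H1].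
    + subst th. destruct Hnz as [x [Hx Hvx]]. apply Hvx.
      apply (harmonic v Hirr); auto. intros. rewrite HPv; auto. ring.
    + assert (eigenvalue n P th).
      { exists v. split; auto. }
      specialize (Hmaxl th H H1). lra.
Qed.

End Chain.


Lemma psum_growing s : (forall k, 0 <= s k) -> Un_growing (sum_f_R0 s).
Proof. intros H k. simpl. specialize (H (S k)). lra. Qed.

Lemma psum_le_lim s l N : (forall k, 0 <= s k) -> infinite_sum s l -> sum_f_R0 s N <= l.
Proof. intros H Hl. apply (growing_ineq (sum_f_R0 s)); auto. apply psum_growing; auto. Qed.

Lemma lim_le s l B : infinite_sum s l -> (forall N, sum_f_R0 s N <= B) -> l <= B.
Proof.
  intros Hl HB. apply (Rle_cv_lim (Un:=sum_f_R0 s) (Vn:=fun _ => B)); auto.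
  intros e He. exists 0%nat. intros. unfold Rdist. rewrite Rminus_diag, Rabs_R0. auto.
Qed.

Lemma series_exists s B : (forall k, 0 <= s k) -> (forall N, sum_f_R0 s N <= B) ->
  infinite_sum s (epsilon (inhabits 0) (fun l => infinite_sum s l)).
Proof.
  intros H HB. apply epsilon_spec.
  destruct (growing_cv (sum_f_R0 s)) as [l Hl].
  - apply psum_growing; auto.
  - exists B. intros x [N ->]. auto.
  - exists l. exact Hl.
Qed.

Lemma exp_psum_le x N : 0 <= x -> sum_f_R0 (fun i => / INR (fact i) * x ^ i) N <= exp x.
Proof.
  intros Hx. apply psum_le_lim.
  - intros k. apply Rmult_le_pos. left. apply Rinv_0_lt_compat, INR_fact_lt_0. apply pow_le; auto.
  - exact (proj2_sig (exist_exp x)).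
Qed.

Lemma exp_series x : infinite_sum (fun i => / INR (fact i) * x ^ i) (exp x).
Proof. exact (proj2_sig (exist_exp x)). Qed.

Lemma sum_fsum_swap m N (F : nat -> nat -> R) :
  sum_f_R0 (fun k => fsum m (fun x => F k x)) N = fsum m (fun x => sum_f_R0 (fun k => F k x) N).
Proof.
  induction N; simpl. reflexivity. rewrite IHN, <- fsum_plus. reflexivity.
Qed.

Lemma sum_le s1 s2 N : (forall k, (k <= N)%nat -> s1 k <= s2 k) -> sum_f_R0 s1 N <= sum_f_R0 s2 N.
Proof.
  induction N; intros H; simpl. apply H; lia.
  assert (sum_f_R0 s1 N <= sum_f_R0 s2 N) by (apply IHN; intros; apply H; lia).
  assert (s1 (S N) <= s2 (S N)) by (apply H; lia). lra.
Qed.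

Lemma sum_nonneg s N : (forall k, (k <= N)%nat -> 0 <= s k) -> 0 <= sum_f_R0 s N.
Proof.
  induction N; intros H; simpl. apply H; lia.
  assert (0 <= sum_f_R0 s N) by (apply IHN; intros; apply H; lia).
  assert (0 <= s (S N)) by (apply H; lia). lra.
Qed.

Lemma sum_mono_N s N M : (forall k, 0 <= s k) -> (N <= M)%nat -> sum_f_R0 s N <= sum_f_R0 s M.
Proof.
  intros H HNM. induction HNM. lra. simpl. specialize (H (S m)). lra.
Qed.

Lemma tri_sum (g : nat -> nat -> R) J :
  sum_f_R0 (fun j => sum_f_R0 (fun i => g i (j - i)%nat) j) J =
  sum_f_R0 (fun i => sum_f_R0 (fun m => g i m) (J - i)) J.
Proof.
  induction J.
  - simpl. reflexivity.
  - assert (L1 : sum_f_R0 (fun j => sum_f_R0 (fun i => g i (j - i)%nat) j) (S J) =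
       sum_f_R0 (fun j => sum_f_R0 (fun i => g i (j - i)%nat) j) J +
       (sum_f_R0 (fun i => g i (S J - i)%nat) J + g (S J) 0%nat)).
    { simpl sum_f_R0 at 1. f_equal. rewrite Nat.sub_diag. reflexivity. }
    assert (L2 : sum_f_R0 (fun i => sum_f_R0 (fun m => g i m) (S J - i)) (S J) =
       sum_f_R0 (fun i => sum_f_R0 (fun m => g i m) (S J - i)) J + g (S J) 0%nat).
    { simpl sum_f_R0 at 1. rewrite Nat.sub_diag. reflexivity. }
    rewrite L1, L2, IHJ.
    rewrite (sum_eq (fun i => sum_f_R0 (fun m => g i m) (S J - i))
                   (fun i => sum_f_R0 (fun m => g i m) (J - i) + g i (S J - i)%nat)).
    + rewrite plus_sum. ring.
    + intros i Hi. replace (S J - i)%nat with (S (J - i)) by lia. simpl.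
      replace (S (J - i)) with (S J - i)%nat by lia. reflexivity.
Qed.

Lemma prod_le_tri (x y : nat -> R) N M :
  (forall k, 0 <= x k) -> (forall k, 0 <= y k) ->
  sum_f_R0 x N * sum_f_R0 y M <=
  sum_f_R0 (fun j => sum_f_R0 (fun i => x i * y (j - i)%nat) j) (N + M).
Proof.
  intros Hx Hy. rewrite (tri_sum (fun i m => x i * y m)).
  rewrite Rmult_comm, scal_sum.
  apply Rle_trans with (sum_f_R0 (fun i => sum_f_R0 (fun m => x i * y m) (N + M - i)) N).
  - apply sum_le. intros k Hk. rewrite scal_sum.
    rewrite (sum_eq (fun i => y i * x k) (fun m => x k * y m)) by (intros; ring).
    apply sum_mono_N; [intros; apply Rmult_le_pos; auto | lia].
  - apply sum_mono_N; [|lia]. intros k. apply sum_nonneg. intros. apply Rmult_le_pos; auto.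
Qed.


Lemma fsum_Sl m g : fsum (S m) g = g 0%nat + fsum m (fun i => g (S i)).
Proof.
  induction m. unfold fsum; simpl; ring.
  rewrite fsum_S, IHm, fsum_S. ring.
Qed.

Lemma C_n0 j : C j 0 = 1.
Proof. unfold C. rewrite Nat.sub_0_r. simpl. field. apply INR_fact_neq_0. Qed.
Lemma C_nn j : C j j = 1.
Proof. unfold C. rewrite Nat.sub_diag. simpl. field. apply INR_fact_neq_0. Qed.

Lemma pascal_sum j (a : nat -> R) :
  fsum (S j) (fun i => C j i * a i) + fsum (S j) (fun i => C j i * a (S i)) =
  fsum (S (S j)) (fun i => C (S j) i * a i).
Proof.
  rewrite (fsum_Sl (S j)), (fsum_S j (fun i => C (S j) (S i) * a (S i))).
  rewrite (fsum_ext j (fun i => C (S j) (S i) * a (S i)) (fun i => C j i * a (S i) + C j (S i) * a (S i))).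
  - rewrite fsum_plus, fsum_Sl, fsum_S, !C_n0, !C_nn. ring.
  - intros i Hi. rewrite <- pascal by auto. ring.
Qed.

Section Killed.
Variable n : nat.
Variable P : nat -> nat -> R.
Variable pi : nat -> R.
Hypothesis Hst : stochastic n P.
Hypothesis Hpi : forall x, (x < n)%nat -> 0 < pi x.
Hypothesis Hpid : prob_dist n pi.
Hypothesis Hrev : reversible n P pi.
Variable lam2 : R.
Hypothesis Hirr : irreducible n P.
Hypothesis Hl2 : is_lambda2 n P lam2.
Variable A : nat -> bool.

Notation ip := (ip n pi).
Notation mv := (mv n).

Definition Km (y x : nat) : R := if orb (A y) (A x) then 0 else P y x.
Definition f1 (x : nat) : R := if A x then 0 else 1.
Definition Kpow (k : nat) : nat -> R := Nat.iter k (mv Km) f1.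
Definition Lm (y x : nat) : R := (Idm y x + Km y x) / 2.
Definition Lpow (k : nat) : nat -> R := Nat.iter k (mv Lm) f1.

Lemma Km_selfadj : selfadj n pi Km.
Proof.
  intros x y Hx Hy. unfold Km. destruct (A x), (A y); simpl; try ring; apply Hrev; auto.
Qed.
Lemma Km_nonneg x y : (x < n)%nat -> (y < n)%nat -> 0 <= Km x y.
Proof. intros. unfold Km. destruct (orb (A x) (A y)). lra. apply (P_nonneg n P Hst); auto. Qed.
Lemma Km_row x : (x < n)%nat -> fsum n (fun y => Km x y) <= 1.
Proof.
  intros Hx. rewrite <- (P_row n P Hst x Hx). apply fsum_le. intros y Hy. unfold Km.
  destruct (orb (A x) (A y)). apply (P_nonneg n P Hst); auto. lra.
Qed.

Lemma mvKm_vanish h y : A y = true -> mv Km h y = 0.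
Proof.
  intros Hy. unfold mv, Km. rewrite Hy. simpl. rewrite (fsum_ext n _ (fun _ => 0)).
  apply fsum_const0. intros; ring.
Qed.

Lemma Kpow_vanish k y : A y = true -> Kpow k y = 0.
Proof.
  intros Hy. destruct k. simpl. unfold f1. rewrite Hy. reflexivity.
  simpl. apply mvKm_vanish; auto.
Qed.

Lemma Kpow_nonneg k y : (y < n)%nat -> 0 <= Kpow k y.
Proof.
  revert y. induction k; intros y Hy; simpl.
  - unfold f1. destruct (A y); lra.
  - apply fsum_nonneg. intros. apply Rmult_le_pos. apply Km_nonneg; auto. apply IHk; auto.
Qed.

Lemma surv_pi k y : (y < n)%nat -> surv_vec n P pi A k y = pi y * Kpow k y.
Proof.
  revert y. induction k; intros y Hy; simpl.
  - unfold f1. destruct (A y); ring.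
  - destruct (A y) eqn:Ey.
    + rewrite mvKm_vanish; auto. ring.
    + unfold mv. rewrite <- fsum_scal. apply fsum_ext. intros x Hx. rewrite IHk; auto.
      unfold Km. rewrite Ey. simpl. destruct (A x) eqn:Ex.
      * rewrite Kpow_vanish; auto. ring.
      * pose proof (Hrev x y Hx Hy). fold (Kpow k). rewrite Rmult_assoc, (Rmult_comm (Kpow k x)), <- Rmult_assoc, H. ring.
Qed.

Lemma mass_pi k : fsum n (surv_vec n P pi A k) = ip f1 (Kpow k).
Proof.
  unfold Submission.ip. apply fsum_ext. intros y Hy. rewrite surv_pi; auto. unfold f1.
  destruct (A y) eqn:E. rewrite Kpow_vanish; auto. ring. ring.
Qed.

Lemma mvLm h y : (y < n)%nat -> mv Lm h y = (h y + mv Km h y) / 2.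
Proof.
  intros Hy. unfold mv at 1, Lm.
  rewrite (fsum_ext n _ (fun x => / 2 * (Idm y x * h x) + / 2 * (Km y x * h x))) by (intros; field).
  rewrite fsum_plus, !fsum_scal. fold (mv Idm h y). rewrite mv_Id; auto. unfold mv. field.
Qed.

Lemma mvKm_sum h (c : nat -> R) m y :
  mv Km (fun z => fsum m (fun i => c i * h i z)) y = fsum m (fun i => c i * mv Km (h i) y).
Proof.
  unfold mv. transitivity (fsum n (fun x => fsum m (fun i => c i * (Km y x * h i x)))).
  - apply fsum_ext. intros. rewrite <- fsum_scal. apply fsum_ext. intros. ring.
  - rewrite fsum_swap. apply fsum_ext. intros. rewrite <- fsum_scal. reflexivity.
Qed.

Lemma Lpow_binom j y : (y < n)%nat ->
  Lpow j y = / 2 ^ j * fsum (S j) (fun i => C j i * Kpow i y).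
Proof.
  revert y. induction j; intros y Hy.
  - simpl. unfold fsum; simpl. rewrite C_n0. simpl. unfold f1. field.
  - change (Lpow (S j) y) with (mv Lm (Lpow j) y). rewrite mvLm by auto.
    rewrite IHj by auto.
    rewrite (mv_ext n Km (Lpow j) (fun z => fsum (S j) (fun i => (/ 2 ^ j * C j i) * Kpow i z)))
      by (intros; rewrite IHj, <- fsum_scal by auto; apply fsum_ext; intros; ring).
    rewrite mvKm_sum.
    change (fun i => / 2 ^ j * C j i * mv Km (Kpow i) y) with (fun i => / 2 ^ j * C j i * Kpow (S i) y).
    rewrite <- (pascal_sum j (fun i => Kpow i y)).
    rewrite (fsum_ext (S j) (fun i => / 2 ^ j * C j i * Kpow (S i) y) (fun i => / 2 ^ j * (C j i * Kpow (S i) y)))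
      by (intros; ring).
    rewrite fsum_scal. simpl pow. field. apply pow_nonzero. lra.
Qed.

Lemma ip_fsum_r g (c : nat -> R) (h : nat -> nat -> R) m :
  ip g (fun y => fsum m (fun i => c i * h i y)) = fsum m (fun i => c i * ip g (h i)).
Proof.
  unfold Submission.ip. transitivity (fsum n (fun x => fsum m (fun i => c i * (pi x * g x * h i x)))).
  - apply fsum_ext. intros. rewrite <- fsum_scal. apply fsum_ext. intros. ring.
  - rewrite fsum_swap. apply fsum_ext. intros. rewrite <- fsum_scal. reflexivity.
Qed.

Lemma b_binom j : ip f1 (Lpow j) = / 2 ^ j * fsum (S j) (fun i => C j i * ip f1 (Kpow i)).
Proof.
  rewrite (ip_ext n pi f1 f1 (Lpow j) (fun y => fsum (S j) (fun i => (/ 2 ^ j * C j i) * Kpow i y))).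
  - rewrite ip_fsum_r, <- fsum_scal. apply fsum_ext. intros. ring.
  - auto.
  - intros. rewrite Lpow_binom, <- fsum_scal by auto. apply fsum_ext. intros. ring.
Qed.

Definition vanish (h : nat -> R) := forall y, (y < n)%nat -> A y = true -> h y = 0.

Lemma Lpow_vanish j : vanish (Lpow j).
Proof.
  intros y Hy Ay. destruct j. simpl. unfold f1. rewrite Ay. reflexivity.
  change (Lpow (S j) y) with (mv Lm (Lpow j) y). rewrite mvLm, mvKm_vanish by auto.
  destruct j. simpl. unfold f1. rewrite Ay. lra.
  assert (Lpow (S j) y = 0).
  { change (Lpow (S j) y) with (mv Lm (Lpow j) y). clear -Hy Ay. revert y Hy Ay. induction j; intros y Hy Ay.
    - rewrite mvLm, mvKm_vanish by auto. simpl. unfold f1. rewrite Ay. lra.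
    - rewrite mvLm, mvKm_vanish by auto. change (Lpow (S j) y) with (mv Lm (Lpow j) y).
      rewrite IHj; auto. lra. }
  rewrite H. lra.
Qed.

Definition mA := measure n pi A.

Lemma ip_f1_f1 : ip f1 f1 = 1 - mA.
Proof.
  unfold mA, measure. destruct Hpid as [_ Hs]. rewrite <- Hs. rewrite <- fsum_minus.
  unfold Submission.ip. apply fsum_ext. intros. unfold f1. destruct (A x); ring.
Qed.

Lemma mA_le1 : mA <= 1.
Proof.
  pose proof (ip_nonneg n pi Hpi f1). rewrite ip_f1_f1 in H. lra.
Qed.

Lemma mA_nonneg : 0 <= mA.
Proof.
  unfold mA, measure. apply fsum_nonneg. intros. destruct (A x). left; auto. lra.
Qed.

Lemma dirichlet h : vanish h -> ip h (mv Km h) <= (1 - mA * (1 - lam2)) * ip h h.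
Proof.
  intros Hv.
  assert (E1 : ip h (mv Km h) = ip h (mv P h)).
  { unfold Submission.ip. apply fsum_ext. intros y Hy. destruct (A y) eqn:Ay.
    - rewrite Hv; auto. ring.
    - f_equal. unfold mv. apply fsum_ext. intros x Hx. unfold Km. rewrite Ay. simpl.
      destruct (A x) eqn:Ax. rewrite Hv; auto. ring. reflexivity. }
  assert (E2 : pmean n pi h = ip f1 h).
  { unfold pmean, Submission.ip. apply fsum_ext. intros x Hx. unfold f1. destruct (A x) eqn:Ax.
    rewrite Hv; auto. ring. ring. }
  pose proof (poincare n P pi Hst Hpi Hpid Hrev lam2 Hirr Hl2 h) as Hp.
  assert (Hcs : ip f1 h * ip f1 h <= ip f1 f1 * ip h h).
  { pose proof (psd_CS n pi Idm f1 h) as H.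
    assert (HI : forall u v, ip u (mv Idm v) = ip u v).
    { intros. apply ip_ext; auto. intros. apply mv_Id; auto. }
    rewrite !HI in H. apply H.
    - intros x y Hx Hy. unfold Idm. rewrite Nat.eqb_sym. destruct (Nat.eqb_spec y x). subst. ring. ring.
    - intros. rewrite HI. apply ip_nonneg; auto. }
  rewrite ip_f1_f1 in Hcs. rewrite E1. rewrite E2 in Hp.
  assert (lam2 < 1) by (eapply lam2_lt1; eauto).
  assert ((1 - lam2) * (ip f1 h * ip f1 h) <= (1 - lam2) * ((1 - mA) * ip h h)).
  { apply Rmult_le_compat_l; lra. }
  nra.
Qed.

End Killed.


Lemma fsum_sum g j : fsum (S j) g = sum_f_R0 g j.
Proof. induction j. unfold fsum; simpl; ring. rewrite fsum_S, IHj. reflexivity. Qed.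

Lemma cv_const c : Un_cv (fun _ => c) c.
Proof. intros e He. exists 0%nat. intros. unfold Rdist. rewrite Rminus_diag, Rabs_R0. auto. Qed.

Section Tail.
Variable n : nat.
Variable P : nat -> nat -> R.
Variable pi : nat -> R.
Hypothesis Hst : stochastic n P.
Hypothesis Hpi : forall x, (x < n)%nat -> 0 < pi x.
Hypothesis Hpid : prob_dist n pi.
Hypothesis Hrev : reversible n P pi.
Variable lam2 : R.
Hypothesis Hirr : irreducible n P.
Hypothesis Hl2 : is_lambda2 n P lam2.
Variable A : nat -> bool.

Notation ip := (ip n pi).
Notation mv := (mv n).
Notation Km := (Km P A).
Notation Lm := (Lm P A).
Notation Lpow := (Lpow n P A).
Notation Kpow := (Kpow n P A).
Notation f1 := (f1 A).
Notation mA := (mA n pi A).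

Definition th := 1 - mA * (1 - lam2) / 2.

Lemma ipL g h : ip g (mv Lm h) = (ip g h + ip g (mv Km h)) / 2.
Proof.
  rewrite (ip_ext n pi g g (mv Lm h) (fun y => /2 * h y + /2 * mv Km h y)).
  rewrite ip_lin_r. field. auto. intros. rewrite mvLm by auto. field.
Qed.

Lemma Lm_selfadj : selfadj n pi Lm.
Proof.
  intros x y Hx Hy. unfold Submission.Lm. pose proof (Km_selfadj n P pi Hrev A x y Hx Hy).
  unfold Idm. rewrite Nat.eqb_sym. destruct (Nat.eqb_spec y x). subst. lra. lra.
Qed.

Lemma Lm_psd g : 0 <= ip g (mv Lm g).
Proof.
  rewrite ipL. destruct (contraction n pi Hpi Km g) as [H1 H2].
  - apply Km_selfadj; auto.
  - intros. apply (Km_nonneg n P Hst A); auto.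
  - intros. apply (Km_row n P Hst A); auto.
  - lra.
Qed.

Lemma L_dir h : vanish n A h -> ip h (mv Lm h) <= th * ip h h.
Proof.
  intros Hv. rewrite ipL. pose proof (dirichlet n P pi Hst Hpi Hpid Hrev lam2 Hirr Hl2 A h Hv).
  unfold th. lra.
Qed.

Lemma Lpow_shift a b : ip (Lpow a) (Lpow b) = ip f1 (Lpow (a + b)).
Proof.
  revert b. induction a; intros b. reflexivity.
  change (Lpow (S a)) with (mv Lm (Lpow a)).
  rewrite selfadj_ip by apply Lm_selfadj.
  change (mv Lm (Lpow b)) with (Lpow (S b)). rewrite IHa. f_equal. f_equal. lia.
Qed.

Definition bL j := ip f1 (Lpow j).

Lemma bL_step j : 0 <= th -> bL (S j) <= th * bL j.
Proof.
  intros Hth. unfold bL. destruct (Nat.Even_or_Odd j) as [[i ->]|[i ->]].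
  - replace (S (2 * i)) with (i + S i)%nat by lia. replace (2 * i)%nat with (i + i)%nat by lia.
    rewrite <- !Lpow_shift. change (Lpow (S i)) with (mv Lm (Lpow i)). apply L_dir.
    apply Lpow_vanish.
  - replace (S (2 * i + 1)) with (S i + S i)%nat by lia. replace (2 * i + 1)%nat with (i + S i)%nat by lia.
    rewrite <- !Lpow_shift.
    set (X := ip (Lpow (S i)) (Lpow (S i))).
    set (Y := ip (Lpow i) (Lpow (S i))).
    pose proof (psd_CS n pi Lm (Lpow i) (Lpow (S i)) Lm_selfadj Lm_psd) as Hcs.
    change (mv Lm (Lpow (S i))) with (Lpow (S (S i))) in Hcs.
    change (mv Lm (Lpow i)) with (Lpow (S i)) in Hcs.
    assert (E : ip (Lpow i) (Lpow (S (S i))) = X) by (unfold X; rewrite !Lpow_shift; f_equal; f_equal; lia). rewrite E in Hcs.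
    fold X Y in Hcs.
    assert (HX : ip (Lpow (S i)) (Lpow (S (S i))) <= th * X).
    { change (Lpow (S (S i))) with (mv Lm (Lpow (S i))). apply L_dir. apply Lpow_vanish. }
    assert (HX0 : 0 <= X) by (apply ip_nonneg; auto).
    assert (HY0 : 0 <= Y).
    { unfold Y. change (Lpow (S i)) with (mv Lm (Lpow i)). apply Lm_psd. }
    destruct HX0 as [HX0|HX0].
    + assert (X * X <= (th * Y) * X) by nra.
      apply (Rmult_le_reg_r X); auto.
    + rewrite <- HX0. apply Rmult_le_pos; auto.
Qed.

Lemma th_nonneg : (exists y, (y < n)%nat /\ A y = false) -> 0 <= th.
Proof.
  intros [y [Hy Ay]].
  set (h := fun x => if Nat.eqb x y then 1 else 0).
  assert (Hv : vanish n A h).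
  { intros x Hx Ax. unfold h. destruct (Nat.eqb_spec x y). subst. congruence. reflexivity. }
  assert (Hpos : 0 < ip h h).
  { apply ip_pos; auto. exists y. split; auto. unfold h. rewrite Nat.eqb_refl. lra. }
  pose proof (L_dir h Hv). pose proof (Lm_psd h). nra.
Qed.

Lemma bL_pow j : 0 <= th -> bL j <= th ^ j * bL 0.
Proof.
  intros Hth. induction j. simpl. lra.
  pose proof (bL_step j Hth). simpl.
  assert (th * bL j <= th * (th ^ j * bL 0)) by (apply Rmult_le_compat_l; auto). lra.
Qed.

Definition aK k := ip f1 (Kpow k).

Lemma aK_nonneg k : 0 <= aK k.
Proof.
  unfold aK, Submission.ip. apply fsum_nonneg. intros. apply Rmult_le_pos.
  apply Rmult_le_pos. left; auto. unfold Submission.f1. destruct (A x); lra. apply Kpow_nonneg; auto.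
Qed.

Lemma inner_conv s j :
  sum_f_R0 (fun i => (/ INR (fact i) * s ^ i * aK i) * (/ INR (fact (j - i)) * s ^ (j - i))) j
  = / INR (fact j) * (2 * s) ^ j * bL j.
Proof.
  unfold bL. rewrite b_binom. rewrite <- fsum_sum. rewrite Rpow_mult_distr.
  replace (/ INR (fact j) * (2 ^ j * s ^ j) * (/ 2 ^ j * fsum (S j) (fun i => C j i * ip f1 (Kpow i))))
    with (/ INR (fact j) * s ^ j * fsum (S j) (fun i => C j i * aK i)).
  - rewrite <- fsum_scal. apply fsum_ext. intros i Hi. unfold C.
    replace (s ^ j) with (s ^ i * s ^ (j - i)).
    + field. split; [apply INR_fact_neq_0|]. split; apply INR_fact_neq_0.
    + rewrite <- pow_add. f_equal. lia.
  - unfold aK. field. split. apply pow_nonzero. lra. apply INR_fact_neq_0.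
Qed.

Lemma tail_pi_partial s N : 0 <= s ->
  sum_f_R0 (surv_term n P pi A s) N <= (1 - mA) * exp (- (s * (mA * (1 - lam2)))).
Proof.
  intros Hs.
  assert (Hterm : forall k, surv_term n P pi A s k = exp (- s) * (/ INR (fact k) * s ^ k * aK k)).
  { intros k. unfold surv_term. rewrite mass_pi by auto. unfold aK. unfold Rdiv. ring. }
  rewrite (sum_eq _ (fun k => (/ INR (fact k) * s ^ k * aK k) * exp (- s))) by (intros; rewrite Hterm; ring).
  rewrite <- scal_sum.
  set (XN := sum_f_R0 (fun k => / INR (fact k) * s ^ k * aK k) N).
  assert (HmA1 : mA <= 1) by (apply mA_le1; auto).
  destruct (classic (exists y, (y < n)%nat /\ A y = false)) as [Hex|Hnex].
  2:{ assert (XN = 0).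
      { unfold XN. rewrite (sum_eq _ (fun _ => 0)). clear. induction N; simpl; lra.
        intros k _. unfold aK, Submission.ip. rewrite (fsum_ext n _ (fun _ => 0)). rewrite fsum_const0. ring.
        intros x Hx. destruct (A x) eqn:Ax. unfold Submission.f1. rewrite Ax. ring.
        exfalso. apply Hnex. exists x. auto. }
      rewrite H. rewrite Rmult_0_r. apply Rmult_le_pos. lra. left. apply exp_pos. }
  pose proof (th_nonneg Hex) as Hth.
  assert (HbL0 : bL 0 = 1 - mA) by (unfold bL; simpl; apply ip_f1_f1; auto).
  set (B := bL 0 * exp (2 * s * th)).
  assert (HM : forall M, XN * sum_f_R0 (fun m => / INR (fact m) * s ^ m) M <= B).
  { intros M. unfold XN. eapply Rle_trans. apply prod_le_tri.
    - intros k. apply Rmult_le_pos. apply Rmult_le_pos. left. apply Rinv_0_lt_compat, INR_fact_lt_0.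
      apply pow_le; auto. apply aK_nonneg.
    - intros k. apply Rmult_le_pos. left. apply Rinv_0_lt_compat, INR_fact_lt_0. apply pow_le; auto.
    - rewrite (sum_eq _ (fun j => / INR (fact j) * (2 * s) ^ j * bL j)) by (intros; apply inner_conv).
      unfold B. eapply Rle_trans.
      + apply (sum_le _ (fun j => bL 0 * (/ INR (fact j) * (2 * s * th) ^ j))).
        intros k _. replace ((2 * s * th) ^ k) with ((2 * s) ^ k * th ^ k) by (symmetry; apply Rpow_mult_distr). pose proof (bL_pow k Hth).
        assert (0 <= / INR (fact k) * (2 * s) ^ k).
        { apply Rmult_le_pos. left. apply Rinv_0_lt_compat, INR_fact_lt_0. apply pow_le; lra. }
        replace (bL 0 * (/ INR (fact k) * ((2 * s) ^ k * th ^ k))) with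
           ((/ INR (fact k) * (2 * s) ^ k) * (th ^ k * bL 0)) by ring.
        apply Rmult_le_compat_l; auto.
      + rewrite (sum_eq _ (fun i => (/ INR (fact i) * (2 * s * th) ^ i) * bL 0)) by (intros; ring).
        rewrite <- scal_sum. apply Rmult_le_compat_l. rewrite HbL0; lra.
        apply exp_psum_le. apply Rmult_le_pos; lra. }
  assert (HXe : XN * exp s <= B).
  { apply (Rle_cv_lim (Un := fun M => XN * sum_f_R0 (fun m => / INR (fact m) * s ^ m) M) (Vn := fun _ => B)).
    - exact HM.
    - apply CV_mult. apply cv_const. apply exp_series.
    - apply cv_const. }
  unfold B in HXe. rewrite HbL0 in HXe.
  assert (XN = XN * exp s * exp (- s)).
  { rewrite Rmult_assoc, <- exp_plus. replace (s + - s) with 0 by ring. rewrite exp_0. ring. }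
  rewrite H.
  assert (exp (- (s * (mA * (1 - lam2)))) = exp (2 * s * th) * exp (- s) * exp (- s)).
  { rewrite <- !exp_plus. f_equal. unfold th. field. }
  rewrite H0.
  assert (0 < exp (- s)) by apply exp_pos.
  replace (exp (- s) * (XN * exp s * exp (- s))) with ((XN * exp s) * (exp (- s) * exp (- s))) by ring.
  replace ((1 - mA) * (exp (2 * s * th) * exp (- s) * exp (- s))) with (((1 - mA) * exp (2 * s * th)) * (exp (- s) * exp (- s))) by ring.
  apply Rmult_le_compat_r. nra. exact HXe.
Qed.

End Tail.


Lemma scal_sum_l c An N : sum_f_R0 (fun i => c * An i) N = c * sum_f_R0 An N.
Proof. rewrite scal_sum. apply sum_eq. intros. ring. Qed.

Definition dlt (x : nat) : nat -> R := fun z => if Nat.eqb x z then 1 else 0.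

Section Surv.
Variable n : nat.
Variable P : nat -> nat -> R.
Hypothesis Hst : stochastic n P.

Notation sv := (surv_vec n P).
Definition mm nu B k := fsum n (sv nu B k).
Definition nnv (nu : nat -> R) := forall y, (y < n)%nat -> 0 <= nu y.

Lemma Pnn x y : (x < n)%nat -> (y < n)%nat -> 0 <= P x y.
Proof. destruct Hst; auto. Qed.
Lemma Prow x : (x < n)%nat -> fsum n (fun y => P x y) = 1.
Proof. destruct Hst; auto. Qed.

Lemma sv_lin a nu1 b nu2 B k y :
  sv (fun z => a * nu1 z + b * nu2 z) B k y = a * sv nu1 B k y + b * sv nu2 B k y.
Proof.
  revert y. induction k; intros y; simpl.
  - destruct (B y); ring.
  - destruct (B y). ring.
    rewrite <- !fsum_scal, <- fsum_plus. apply fsum_ext. intros. rewrite IHk. ring.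
Qed.

Lemma sv_restrict nu1 nu2 B k y :
  (forall z, (z < n)%nat -> B z = false -> nu1 z = nu2 z) -> (y < n)%nat ->
  sv nu1 B k y = sv nu2 B k y.
Proof.
  intros H. revert y. induction k; intros y Hy; simpl.
  - destruct (B y) eqn:E; auto.
  - destruct (B y); auto. apply fsum_ext. intros. rewrite IHk; auto.
Qed.

Lemma sv_nonneg nu B k y : nnv nu -> (y < n)%nat -> 0 <= sv nu B k y.
Proof.
  intros H. revert y. induction k; intros y Hy; simpl.
  - destruct (B y). lra. auto.
  - destruct (B y). lra. apply fsum_nonneg. intros. apply Rmult_le_pos; auto. apply Pnn; auto.
Qed.

Lemma sv_step nu B k y : sv nu B (S k) y = sv (sv nu B 1) B k y.
Proof.
  revert y. induction k; intros y.
  - simpl. destruct (B y); reflexivity.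
  - change (sv nu B (S (S k)) y) with (if B y then 0 else fsum n (fun x => sv nu B (S k) x * P x y)).
    change (sv (sv nu B 1) B (S k) y) with
      (if B y then 0 else fsum n (fun x => sv (sv nu B 1) B k x * P x y)).
    destruct (B y). reflexivity. apply fsum_ext. intros. rewrite IHk. reflexivity.
Qed.

Lemma mm_decr nu B k : nnv nu -> mm nu B (S k) <= mm nu B k.
Proof.
  intros H. unfold mm. simpl.
  apply Rle_trans with (fsum n (fun y => fsum n (fun x => sv nu B k x * P x y))).
  - apply fsum_le. intros y Hy. destruct (B y). apply fsum_nonneg. intros. apply Rmult_le_pos.
    apply sv_nonneg; auto. apply Pnn; auto. lra.
  - rewrite fsum_swap. apply fsum_le. intros x Hx. rewrite fsum_scal, Prow by auto. lra.
Qed.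

Lemma mm_decr_add nu B k j : nnv nu -> mm nu B (k + j) <= mm nu B k.
Proof.
  intros H. induction j. rewrite Nat.add_0_r. lra.
  replace (k + S j)%nat with (S (k + j)) by lia. pose proof (mm_decr nu B (k + j) H). lra.
Qed.

Lemma mm_le_mass nu B k : nnv nu -> mm nu B k <= fsum n nu.
Proof.
  intros H. replace k with (0 + k)%nat by lia. eapply Rle_trans. apply mm_decr_add; auto.
  unfold mm. simpl. apply fsum_le. intros. destruct (B x). apply H; auto. lra.
Qed.

Lemma mm_nonneg nu B k : nnv nu -> 0 <= mm nu B k.
Proof. intros. apply fsum_nonneg. intros. apply sv_nonneg; auto. Qed.

Lemma sv_delta nu B k y : (y < n)%nat -> sv nu B k y = fsum n (fun x => nu x * sv (dlt x) B k y).
Proof.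
  revert y. induction k; intros y Hy; simpl.
  - destruct (B y). rewrite (fsum_ext n _ (fun _ => 0)). rewrite fsum_const0; auto. intros; ring.
    unfold dlt. symmetry. apply fsum_delta_r; auto.
  - destruct (B y). rewrite (fsum_ext n _ (fun _ => 0)). rewrite fsum_const0; auto. intros; ring.
    transitivity (fsum n (fun z => fsum n (fun x => nu x * (sv (dlt x) B k z * P z y)))).
    + apply fsum_ext. intros z Hz. rewrite IHk, <- fsum_scal_r by auto. apply fsum_ext. intros. ring.
    + rewrite fsum_swap. apply fsum_ext. intros. rewrite fsum_scal. reflexivity.
Qed.

Lemma mm_delta nu B k : mm nu B k = fsum n (fun x => nu x * mm (dlt x) B k).
Proof.
  unfold mm. transitivity (fsum n (fun y => fsum n (fun x => nu x * sv (dlt x) B k y))).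
  - apply fsum_ext. intros. apply sv_delta; auto.
  - rewrite fsum_swap. apply fsum_ext. intros. rewrite fsum_scal. reflexivity.
Qed.

Lemma dlt_nonneg x : nnv (dlt x).
Proof. intros y _. unfold dlt. destruct (Nat.eqb x y); lra. Qed.

Definition pw (t : R) (k : nat) : R := exp (- t) * t ^ k / INR (fact k).

Lemma pw_nonneg t k : 0 <= t -> 0 <= pw t k.
Proof.
  intros. unfold pw. unfold Rdiv. apply Rmult_le_pos. apply Rmult_le_pos. left; apply exp_pos.
  apply pow_le; auto. left. apply Rinv_0_lt_compat, INR_fact_lt_0.
Qed.

Lemma pw_sum_le1 t N : 0 <= t -> sum_f_R0 (pw t) N <= 1.
Proof.
  intros Ht. rewrite (sum_eq _ (fun k => (/ INR (fact k) * t ^ k) * exp (- t))).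
  rewrite <- scal_sum. rewrite Rmult_comm.
  apply Rle_trans with (exp t * exp (- t)).
  apply Rmult_le_compat_r. left; apply exp_pos. apply exp_psum_le; auto.
  rewrite <- exp_plus. replace (t + - t) with 0 by ring. rewrite exp_0. lra.
  intros. unfold pw. unfold Rdiv. ring.
Qed.

Lemma surv_term_pw nu B t k : surv_term n P nu B t k = pw t k * mm nu B k.
Proof. reflexivity. Qed.

Lemma tail_spec nu B t : nnv nu -> 0 <= t ->
  infinite_sum (surv_term n P nu B t) (tail_prob n P nu B t).
Proof.
  intros H Ht. unfold tail_prob. apply (series_exists _ (fsum n nu)).
  - intros k. rewrite surv_term_pw. apply Rmult_le_pos. apply pw_nonneg; auto. apply mm_nonneg; auto.
  - intros N. apply Rle_trans with (sum_f_R0 (fun k => pw t k * fsum n nu) N).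
    + apply sum_le. intros. rewrite surv_term_pw. apply Rmult_le_compat_l. apply pw_nonneg; auto.
      apply mm_le_mass; auto.
    + rewrite (sum_eq _ (fun k => fsum n nu * pw t k)) by (intros; ring). rewrite scal_sum_l.
      pose proof (pw_sum_le1 t N Ht). assert (0 <= fsum n nu) by (apply fsum_nonneg; auto). nra.
Qed.

Lemma tail_nonneg nu B t : nnv nu -> 0 <= t -> 0 <= tail_prob n P nu B t.
Proof.
  intros H Ht. eapply Rle_trans with (sum_f_R0 (surv_term n P nu B t) 0).
  simpl. rewrite surv_term_pw. apply Rmult_le_pos. apply pw_nonneg; auto. apply mm_nonneg; auto.
  apply psum_le_lim. intros. rewrite surv_term_pw. apply Rmult_le_pos. apply pw_nonneg; auto.
  apply mm_nonneg; auto. apply tail_spec; auto.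
Qed.

Lemma psum_le_tail nu B t N : nnv nu -> 0 <= t ->
  sum_f_R0 (surv_term n P nu B t) N <= tail_prob n P nu B t.
Proof.
  intros H Ht. apply psum_le_lim. intros. rewrite surv_term_pw. apply Rmult_le_pos.
  apply pw_nonneg; auto. apply mm_nonneg; auto. apply tail_spec; auto.
Qed.

Lemma inf_sum_scal s l c : infinite_sum s l -> infinite_sum (fun k => c * s k) (c * l).
Proof.
  intros H. unfold infinite_sum in *.
  assert (Un_cv (fun N => c * sum_f_R0 s N) (c * l)).
  { apply CV_mult. apply cv_const. exact H. }
  intros e He. destruct (H0 e He) as [N HN]. exists N. intros m Hm.
  specialize (HN m Hm). rewrite scal_sum in HN.
  rewrite (sum_eq _ (fun i => s i * c)) by (intros; ring). exact HN.
Qed.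

Lemma inf_sum_fsum m (F : nat -> nat -> R) (l : nat -> R) :
  (forall x, (x < m)%nat -> infinite_sum (F x) (l x)) ->
  infinite_sum (fun k => fsum m (fun x => F x k)) (fsum m l).
Proof.
  induction m; intros H.
  - intros e He. exists 0%nat. intros. rewrite (sum_eq _ (fun _ => 0)).
    unfold Rdist. rewrite fsum_0.
    replace (sum_f_R0 (fun _ => 0) n0) with 0. rewrite Rminus_0_r, Rabs_R0. auto.
    clear. induction n0; simpl; lra. intros. reflexivity.
  - assert (H1 : infinite_sum (fun k => fsum m (fun x => F x k)) (fsum m l)) by (apply IHm; intros; apply H; lia).
    assert (H2 : infinite_sum (F m) (l m)) by (apply H; lia).
    rewrite fsum_S. intros e He.
    assert (Hc : Un_cv (fun N => sum_f_R0 (fun k => fsum m (fun x => F x k)) N + sum_f_R0 (F m) N)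
                   (fsum m l + l m)) by (apply CV_plus; auto).
    destruct (Hc e He) as [N HN]. exists N. intros k Hk. specialize (HN k Hk).
    rewrite (sum_eq _ (fun i => fsum m (fun x => F x i) + F m i)) by (intros; rewrite fsum_S; reflexivity).
    rewrite plus_sum. exact HN.
Qed.

Lemma tail_delta nu B t : nnv nu -> 0 <= t ->
  tail_prob n P nu B t = fsum n (fun x => nu x * tail_prob n P (dlt x) B t).
Proof.
  intros H Ht. apply (uniqueness_sum (surv_term n P nu B t)).
  - apply tail_spec; auto.
  - assert (HH : infinite_sum (fun k => fsum n (fun x => nu x * surv_term n P (dlt x) B t k))
                  (fsum n (fun x => nu x * tail_prob n P (dlt x) B t))).
    { apply (inf_sum_fsum n (fun x k => nu x * surv_term n P (dlt x) B t k)).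
      intros. apply inf_sum_scal. apply tail_spec; auto. apply dlt_nonneg. }
    intros e He. destruct (HH e He) as [N HN]. exists N. intros k Hk. specialize (HN k Hk).
    rewrite (sum_eq _ (fun i => fsum n (fun x => nu x * surv_term n P (dlt x) B t i))). exact HN.
    intros i _. rewrite !surv_term_pw, mm_delta, <- fsum_scal. apply fsum_ext. intros. rewrite surv_term_pw. ring.
Qed.

Section SM.
Variables (A G : nat -> bool) (s eps : R).
Hypothesis Hs : 0 <= s.
Hypothesis Heps : 0 <= eps.
Hypothesis HAG : forall y, A y = true -> G y = true.
Hypothesis HG : forall x, (x < n)%nat -> G x = true -> tail_prob n P (dlt x) A s <= eps.

Definition nuG (nu : nat -> R) := fun y => if G y then nu y else 0.
Definition nuGc (nu : nat -> R) := fun y => if G y then 0 else nu y.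

Lemma Gpart nu N : nnv nu ->
  sum_f_R0 (fun b => pw s b * mm (nuG nu) A b) N <= eps * fsum n (nuG nu).
Proof.
  intros H.
  rewrite (sum_eq _ (fun b => fsum n (fun x => nuG nu x * (pw s b * mm (dlt x) A b)))).
  - rewrite sum_fsum_swap. rewrite <- fsum_scal. apply fsum_le. intros x Hx.
    unfold nuG. destruct (G x) eqn:Gx.
    + rewrite scal_sum_l. pose proof (H x Hx).
      rewrite (sum_eq _ (surv_term n P (dlt x) A s)) by (intros; reflexivity).
      pose proof (psum_le_tail (dlt x) A s N (dlt_nonneg x) Hs). pose proof (HG x Hx Gx). nra.
    + rewrite (sum_eq _ (fun _ => 0)). clear. induction N; simpl; lra. intros; ring.
  - intros b _. rewrite mm_delta, <- fsum_scal. apply fsum_ext. intros. ring.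
Qed.

Lemma strong_markov a : forall nu N, nnv nu ->
  sum_f_R0 (fun b => pw s b * mm nu A (a + b)) N <= mm nu G a + eps * fsum n nu.
Proof.
  induction a; intros nu N H.
  - assert (Hnn1 : nnv (nuG nu)) by (intros y Hy; unfold nuG; destruct (G y); auto; lra).
    assert (Hnn2 : nnv (nuGc nu)) by (intros y Hy; unfold nuGc; destruct (G y); auto; lra).
    assert (Hsplit : forall k, mm nu A k = mm (nuG nu) A k + mm (nuGc nu) A k).
    { intros k. unfold mm. rewrite <- fsum_plus. apply fsum_ext. intros y Hy.
      rewrite (sv_restrict nu (fun z => 1 * nuG nu z + 1 * nuGc nu z)) by
        (auto; intros; unfold nuG, nuGc; destruct (G z); ring).
      rewrite sv_lin. ring. }
    rewrite (sum_eq _ (fun b => pw s b * mm (nuG nu) A b + pw s b * mm (nuGc nu) A b))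
      by (intros; simpl; rewrite Hsplit; ring).
    rewrite plus_sum.
    pose proof (Gpart nu N H).
    assert (sum_f_R0 (fun b => pw s b * mm (nuGc nu) A b) N <= fsum n (nuGc nu)).
    { apply Rle_trans with (sum_f_R0 (fun b => fsum n (nuGc nu) * pw s b) N).
      apply sum_le. intros. rewrite Rmult_comm. apply Rmult_le_compat_r. apply pw_nonneg; auto.
      apply mm_le_mass; auto. rewrite scal_sum_l. pose proof (pw_sum_le1 s N Hs).
      assert (0 <= fsum n (nuGc nu)) by (apply fsum_nonneg; auto). nra. }
    assert (mm nu G 0 = fsum n (nuGc nu)).
    { unfold mm. apply fsum_ext. intros. simpl. unfold nuGc. reflexivity. }
    assert (fsum n nu = fsum n (nuG nu) + fsum n (nuGc nu)).
    { rewrite <- fsum_plus. apply fsum_ext. intros. unfold nuG, nuGc. destruct (G x); ring. }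
    assert (0 <= fsum n (nuG nu)) by (apply fsum_nonneg; auto).
    assert (0 <= eps * fsum n (nuGc nu)) by (apply Rmult_le_pos; auto; apply fsum_nonneg; auto). rewrite H2, H3. lra.
  - assert (Hnn1 : nnv (nuG nu)) by (intros y Hy; unfold nuG; destruct (G y); auto; lra).
    assert (Hnn2 : nnv (nuGc nu)) by (intros y Hy; unfold nuGc; destruct (G y); auto; lra).
    set (nu2 := sv (nuGc nu) A 1).
    assert (Hnn3 : nnv nu2) by (intros y Hy; apply sv_nonneg; auto).
    assert (Hsplit : forall k, mm nu A k = mm (nuG nu) A k + mm (nuGc nu) A k).
    { intros k. unfold mm. rewrite <- fsum_plus. apply fsum_ext. intros y Hy.
      rewrite (sv_restrict nu (fun z => 1 * nuG nu z + 1 * nuGc nu z)) by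
        (auto; intros; unfold nuG, nuGc; destruct (G z); ring).
      rewrite sv_lin. ring. }
    apply Rle_trans with (sum_f_R0 (fun b => pw s b * mm (nuG nu) A b) N +
                          sum_f_R0 (fun b => pw s b * mm nu2 A (a + b)) N).
    + rewrite <- plus_sum. apply sum_le. intros b _. rewrite Hsplit. rewrite Rmult_plus_distr_l.
      apply Rplus_le_compat.
      * apply Rmult_le_compat_l. apply pw_nonneg; auto.
        replace (S a + b)%nat with (b + S a)%nat by lia. apply mm_decr_add; auto.
      * right. f_equal. unfold mm. apply fsum_ext. intros. simpl plus. rewrite sv_step. reflexivity.
    + pose proof (Gpart nu N H). pose proof (IHa nu2 N Hnn3).
      assert (E1 : mm nu2 G a = mm nu G (S a)).
      { unfold mm. apply fsum_ext. intros y Hy. rewrite sv_step. apply sv_restrict; auto.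
        intros z Hz Gz. unfold nu2. simpl. rewrite Gz.
        assert (A z = false) by (destruct (A z) eqn:E; auto; apply HAG in E; congruence).
        rewrite H2. apply fsum_ext. intros x Hx. unfold nuGc. destruct (A x) eqn:Ax.
        rewrite (HAG x Ax). reflexivity. reflexivity. }
      assert (E2 : fsum n nu2 <= fsum n (nuGc nu)).
      { change (fsum n nu2) with (mm (nuGc nu) A 1). replace 1%nat with (0 + 1)%nat by lia.
        eapply Rle_trans. apply mm_decr_add; auto. unfold mm. simpl. apply fsum_le. intros.
        destruct (A x). apply Hnn2; auto. lra. }
      assert (fsum n nu = fsum n (nuG nu) + fsum n (nuGc nu)).
      { rewrite <- fsum_plus. apply fsum_ext. intros. unfold nuG, nuGc. destruct (G x); ring. }
      rewrite E1 in H1. nra.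
Qed.

End SM.

End Surv.


Lemma pw_binom t s k : pw (t + s) k = sum_f_R0 (fun a => pw t a * pw s (k - a)) k.
Proof.
  unfold pw. rewrite binomial. rewrite Ropp_plus_distr, exp_plus.
  set (An := fun i => C k i * t ^ i * s ^ (k - i)).
  replace (exp (- t) * exp (- s) * sum_f_R0 An k / INR (fact k)) with
    ((exp (- t) * exp (- s) / INR (fact k)) * sum_f_R0 An k) by (unfold Rdiv; ring).
  rewrite scal_sum. apply sum_eq. intros i Hi. unfold An, C. field.
  split; [apply INR_fact_neq_0|]. split; apply INR_fact_neq_0.
Qed.

Section Comp.
Variable n : nat.
Variable P : nat -> nat -> R.
Hypothesis Hst : stochastic n P.
Variables (A G : nat -> bool) (s eps : R).
Hypothesis Hs : 0 <= s.
Hypothesis Heps : 0 <= eps.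
Hypothesis HAG : forall y, A y = true -> G y = true.
Hypothesis HG : forall x, (x < n)%nat -> G x = true -> tail_prob n P (dlt x) A s <= eps.

Lemma tail_composite mu t : nnv n mu -> fsum n mu = 1 -> 0 <= t ->
  tail_prob n P mu A (t + s) <= tail_prob n P mu G t + eps.
Proof.
  intros Hmu Hm1 Ht.
  apply (lim_le (surv_term n P mu A (t + s))). apply tail_spec; auto. lra.
  intros N.
  set (g := fun a b => pw t a * pw s b * mm n P mu A (a + b)).
  assert (E : sum_f_R0 (surv_term n P mu A (t + s)) N =
              sum_f_R0 (fun k => sum_f_R0 (fun a => g a (k - a)%nat) k) N).
  { apply sum_eq. intros k _. rewrite surv_term_pw, pw_binom.
    rewrite Rmult_comm, scal_sum. apply sum_eq. intros a Ha. unfold g.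
    replace (a + (k - a))%nat with k by lia. ring. }
  rewrite E, tri_sum.
  apply Rle_trans with (sum_f_R0 (fun a => pw t a * (mm n P mu G a + eps)) N).
  - apply sum_le. intros a _.
    rewrite (sum_eq _ (fun b => pw t a * (pw s b * mm n P mu A (a + b)))) by (intros; unfold g; ring).
    rewrite scal_sum_l. apply Rmult_le_compat_l. apply pw_nonneg; auto.
    pose proof (strong_markov n P Hst A G s eps Hs Heps HAG HG a mu (N - a) Hmu). rewrite Hm1 in H. lra.
  - rewrite (sum_eq _ (fun a => surv_term n P mu G t a + eps * pw t a)) by (intros; rewrite surv_term_pw; ring).
    rewrite plus_sum, scal_sum_l. apply Rplus_le_compat. apply psum_le_tail; auto.
    pose proof (pw_sum_le1 t N Ht). nra.
Qed.
End Comp.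


Lemma exp_mono x y : x <= y -> exp x <= exp y.
Proof. intros [H|H]. left; apply exp_increasing; auto. subst; lra. Qed.

Lemma ln_nonneg x : 1 <= x -> 0 <= ln x.
Proof. intros [H|H]. rewrite <- ln_1. left. apply ln_increasing; lra. subst. rewrite ln_1. lra. Qed.

Lemma glb_exists (E : R -> Prop) : (exists x, E x) -> (forall x, E x -> 0 <= x) -> exists m, is_glb E m.
Proof.
  intros Hne Hlow.
  set (F := fun x => E (- x)).
  destruct (completeness F) as [m [Hub Hlub]].
  - exists 0. intros x Hx. apply Hlow in Hx. lra.
  - destruct Hne as [x Hx]. exists (- x). unfold F. rewrite Ropp_involutive. auto.
  - exists (- m). split.
    + intros x Hx. assert (F (- x)) by (unfold F; rewrite Ropp_involutive; auto).
      apply Hub in H. lra.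
    + intros b Hb. assert (m <= - b).
      { apply Hlub. intros x Hx. apply Hb in Hx. lra. }
      lra.
Qed.

Lemma hit_glb n P pi mu d q : (exists t, hit_set n P pi mu d q t) ->
  is_glb (hit_set n P pi mu d q) (hit n P pi mu d q).
Proof.
  intros Hne. unfold hit. apply epsilon_spec. apply glb_exists; auto.
  intros x [Hx _]. auto.
Qed.

Lemma sv_zero n P B k y : (y < n)%nat -> surv_vec n P (fun _ => 0) B k y = 0.
Proof.
  revert y. induction k; intros y Hy; simpl. destruct (B y); auto.
  destruct (B y); auto. rewrite (fsum_ext n _ (fun _ => 0)). apply fsum_const0.
  intros. rewrite IHk; auto. ring.
Qed.

Section Main.
Variable n : nat.
Variable P : nat -> nat -> R.
Variable pi mu : nat -> R.
Variable lam2 : R.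
Hypothesis Hst : stochastic n P.
Hypothesis Hirr : irreducible n P.
Hypothesis Hpid : prob_dist n pi.
Hypothesis Hpi : forall x, (x < n)%nat -> 0 < pi x.
Hypothesis Hrev : reversible n P pi.
Hypothesis Hmu : prob_dist n mu.
Hypothesis Hl2 : is_lambda2 n P lam2.

Lemma pi_nnv : nnv n pi.
Proof. intros y Hy. left. auto. Qed.
Lemma mu_nnv : nnv n mu.
Proof. intros y Hy. destruct Hmu. auto. Qed.

Lemma tail_pi_bound A s : 0 <= s ->
  tail_prob n P pi A s <= (1 - measure n pi A) * exp (- (s * (measure n pi A * (1 - lam2)))).
Proof.
  intros Hs. apply (lim_le (surv_term n P pi A s)). apply tail_spec; auto. apply pi_nnv.
  intros N. apply (tail_pi_partial n P pi Hst Hpi Hpid Hrev lam2 Hirr Hl2 A s N Hs).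
Qed.

Lemma tail_pi_bound2 A s b : 0 <= s -> b <= measure n pi A ->
  tail_prob n P pi A s <= (1 - b) * exp (- (s * (b * (1 - lam2)))).
Proof.
  intros Hs Hb. eapply Rle_trans. apply tail_pi_bound; auto.
  pose proof (lam2_lt1 n P pi Hst Hpi Hrev lam2 Hl2).
  pose proof (mA_le1 n pi Hpi Hpid A). unfold mA in H0.
  apply Rmult_le_compat. lra. left; apply exp_pos. lra.
  apply exp_mono. assert (0 <= s * ((measure n pi A - b) * (1 - lam2))).
  { apply Rmult_le_pos; auto. apply Rmult_le_pos; lra. }
  nra.
Qed.

Lemma hit_nonempty g q : 0 < g -> 0 < q -> exists t, hit_set n P pi mu g q t.
Proof.
  intros Hg Hq.
  assert (Hn : (0 < n)%nat).
  { destruct n; [|lia]. destruct Hpid as [_ Hs]. unfold fsum in Hs. simpl in Hs. lra. }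
  set (c := fsum n (fun x => / pi x)).
  assert (Hc : 0 < c).
  { unfold c. destruct n. lia. rewrite fsum_S. assert (0 <= fsum n0 (fun x => / pi x)).
    { apply fsum_nonneg. intros. left. apply Rinv_0_lt_compat. apply Hpi. lia. }
    assert (0 < / pi n0) by (apply Rinv_0_lt_compat; apply Hpi; lia). lra. }
  assert (Hmuc : forall x, (x < n)%nat -> mu x <= c * pi x).
  { intros x Hx. assert (mu x <= 1).
    { destruct Hmu as [Hm1 Hm2]. rewrite <- Hm2. apply fsum_single_le; auto. }
    assert (/ pi x <= c) by (apply (fsum_single_le n (fun x => / pi x)); auto;
      intros; left; apply Rinv_0_lt_compat; auto).
    pose proof (Hpi x Hx). assert (/ pi x * pi x = 1) by (field; lra). nra. }
  set (gap := 1 - lam2).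
  assert (Hgap : 0 < gap) by (unfold gap; pose proof (lam2_lt1 n P pi Hst Hpi Hrev lam2 Hl2); lra).
  set (t := Rmax 0 (ln (c / q) / (g * gap))).
  exists t. split. apply Rmax_l.
  intros B HB.
  assert (Ht : 0 <= t) by apply Rmax_l.
  rewrite (tail_delta n P Hst mu B t mu_nnv Ht).
  apply Rle_trans with (c * tail_prob n P pi B t).
  - rewrite (tail_delta n P Hst pi B t pi_nnv Ht), <- fsum_scal. apply fsum_le. intros x Hx.
    pose proof (tail_nonneg n P Hst (dlt x) B t (dlt_nonneg n x) Ht).
    pose proof (Hmuc x Hx). nra.
  - pose proof (tail_pi_bound2 B t g Ht HB) as Hb.
    assert (Hle : exp (- (t * (g * gap))) <= q / c).
    { assert (ln (c / q) <= t * (g * gap)).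
      { assert (ln (c / q) / (g * gap) <= t) by apply Rmax_r.
        assert (0 < g * gap) by (apply Rmult_lt_0_compat; auto).
        apply (Rmult_le_compat_r (g * gap)) in H; [|lra].
        unfold Rdiv in H. rewrite Rmult_assoc, Rinv_l in H by lra. lra. }
      replace (q / c) with (exp (- ln (c / q))).
      apply exp_mono. lra.
      rewrite exp_Ropp, exp_ln. field. split; lra. unfold Rdiv. apply Rmult_lt_0_compat; auto.
      apply Rinv_0_lt_compat; auto. }
    assert (0 <= tail_prob n P pi B t) by (apply tail_nonneg; auto; apply pi_nnv).
    fold gap in Hb.
    assert (tail_prob n P pi B t <= q / c).
    { eapply Rle_trans. apply Hb. eapply Rle_trans; [|apply Hle].
      assert (0 < exp (- (t * (g * gap)))) by apply exp_pos.
      assert (0 <= g) by lra. nra. }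
    apply (Rmult_le_compat_l c) in H0; [|lra]. replace (c * (q / c)) with q in H0 by (field; lra). lra.
Qed.

Lemma main_bound eps delta beta gamma :
  0 < eps -> eps < delta -> delta < 1 -> 0 < beta -> beta <= gamma -> gamma < 1 ->
  forall t, hit_set n P pi mu gamma (delta - eps) t ->
  hit_set n P pi mu beta delta (t + / beta * t_rel lam2 * ln ((1 - beta) / ((1 - gamma) * eps))).
Proof.
  intros He Hed Hd1 Hb Hbg Hg1 t [Ht Hset].
  set (gap := 1 - lam2).
  assert (Hgap : 0 < gap) by (unfold gap; pose proof (lam2_lt1 n P pi Hst Hpi Hrev lam2 Hl2); lra).
  set (X := (1 - beta) / ((1 - gamma) * eps)).
  assert (HX1 : 1 <= X).
  { unfold X. apply (Rmult_le_reg_r ((1 - gamma) * eps)). apply Rmult_lt_0_compat; lra.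
    unfold Rdiv. rewrite Rmult_assoc, Rinv_l. nra. apply Rgt_not_eq. apply Rmult_lt_0_compat; lra. }
  set (s := / beta * t_rel lam2 * ln X).
  assert (Hs : 0 <= s).
  { unfold s, t_rel. fold gap. apply Rmult_le_pos. apply Rmult_le_pos; left; apply Rinv_0_lt_compat; lra.
    apply ln_nonneg; auto. }
  assert (Hsb : s * (beta * gap) = ln X).
  { unfold s, t_rel. fold gap. field. lra. }
  split. lra.
  intros A HA.
  set (G := fun x => if Rle_dec (tail_prob n P (dlt x) A s) eps then true else false).
  assert (HAG : forall y, A y = true -> G y = true).
  { intros y Ay. unfold G. destruct (Rle_dec (tail_prob n P (dlt y) A s) eps) as [|Hn]; auto.
    exfalso. apply Hn. apply (lim_le (surv_term n P (dlt y) A s)).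
    apply tail_spec; auto. apply dlt_nonneg.
    intros N. rewrite (sum_eq _ (fun _ => 0)). clear -He. induction N; simpl; lra.
    intros k _. rewrite surv_term_pw. unfold mm.
    rewrite (fsum_ext n _ (fun _ => 0)). rewrite fsum_const0. ring.
    intros z Hz. rewrite (sv_restrict n P (dlt y) (fun _ => 0)); auto. apply sv_zero; auto.
    intros w Hw Aw. unfold dlt. destruct (Nat.eqb_spec y w). subst. congruence. reflexivity. }
  assert (HG : forall x, (x < n)%nat -> G x = true -> tail_prob n P (dlt x) A s <= eps).
  { intros x Hx. unfold G. destruct (Rle_dec (tail_prob n P (dlt x) A s) eps); auto. congruence. }
  assert (HmG : gamma <= measure n pi G).
  { set (Ds := fsum n (fun x => if G x then 0 else pi x)).
    assert (Hm : measure n pi G = 1 - Ds).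
    { destruct Hpid as [_ Hs1]. rewrite <- Hs1. unfold measure, Ds. rewrite <- fsum_minus.
      apply fsum_ext. intros. destruct (G x); ring. }
    assert (HDs : eps * Ds <= tail_prob n P pi A s).
    { rewrite (tail_delta n P Hst pi A s pi_nnv Hs). unfold Ds. rewrite <- fsum_scal.
      apply fsum_le. intros x Hx. pose proof (Hpi x Hx).
      pose proof (tail_nonneg n P Hst (dlt x) A s (dlt_nonneg n x) Hs).
      unfold G. destruct (Rle_dec (tail_prob n P (dlt x) A s) eps) as [|Hn]. nra.
      apply Rnot_le_lt in Hn. nra. }
    pose proof (tail_pi_bound2 A s beta Hs HA) as Hb2. fold gap in Hb2.
    rewrite Hsb in Hb2. rewrite exp_Ropp, exp_ln in Hb2 by lra.
    assert ((1 - beta) * / X = (1 - gamma) * eps).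
    { unfold X. field. split; lra. }
    rewrite H in Hb2.
    assert (Ds <= 1 - gamma).
    { apply (Rmult_le_reg_l eps); auto. lra. }
    lra. }
  pose proof (Hset G HmG) as HtG.
  pose proof (tail_composite n P Hst A G s eps Hs (Rlt_le _ _ He) HAG HG mu t mu_nnv) as Hc.
  destruct Hmu as [_ Hm1]. specialize (Hc Hm1 Ht). lra.
Qed.

End Main.

Theorem corollary4p3 (n : nat) (P : nat -> nat -> R) (pi mu : nat -> R)
  (lam2 : R) :
  stochastic n P ->
  irreducible n P ->
  prob_dist n pi -> (forall x, (x < n)%nat -> 0 < pi x) ->
  reversible n P pi ->
  prob_dist n mu ->
  is_lambda2 n P lam2 ->
  forall eps delta beta gamma : R,
    0 < eps -> eps < delta -> delta < 1 ->
    0 < beta -> beta <= gamma -> gamma < 1 ->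
    hit n P pi mu gamma delta <= hit n P pi mu beta delta /\
    hit n P pi mu beta delta <=
      hit n P pi mu gamma (delta - eps)
      + / beta * t_rel lam2 * ln ((1 - beta) / ((1 - gamma) * eps)).
Proof.
  intros Hst Hirr Hpid Hpi Hrev Hmu Hl2 eps delta beta gamma He Hed Hd1 Hb Hbg Hg1.
  assert (Hne : forall g q, 0 < g -> 0 < q -> is_glb (hit_set n P pi mu g q) (hit n P pi mu g q)).
  { intros g q Hg Hq. apply hit_glb. apply (hit_nonempty n P pi mu lam2); auto. }
  destruct (Hne gamma delta) as [Hg1l Hg1g]; try lra.
  destruct (Hne beta delta) as [Hb1l Hb1g]; try lra.
  destruct (Hne gamma (delta - eps)) as [Hg2l Hg2g]; try lra.
  split.
  - apply Hb1g. intros x [Hx HB]. apply Hg1l. split; auto. intros B HmB. apply HB. lra.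
  - set (s := / beta * t_rel lam2 * ln ((1 - beta) / ((1 - gamma) * eps))) in *.
    assert (hit n P pi mu beta delta - s <= hit n P pi mu gamma (delta - eps)).
    { apply Hg2g. intros t Ht. pose proof (main_bound n P pi mu lam2 Hst Hirr Hpid Hpi Hrev Hmu Hl2
        eps delta beta gamma He Hed Hd1 Hb Hbg Hg1 t Ht) as H. fold s in H.
      apply Hb1l in H. lra. }
    lra.
Qed.
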